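(* Let $X,Y$ be real Banach spaces, $D\subseteq X$ a nonempty open connected set, $x_0\in D$, $y_0=f(x_0)$, and $f:D\to Y$ a local homeomorphism. Then there exists a flow $\Phi:D_\Phi\to D$ in $D$ satisfying $$f(\Phi(x,t))=\Psi(f(x),t)\qquad\text{for all }(x,t)\in D_\Phi,$$ where $\Psi(y,t)=y_0+e^{-t}(y-y_0)$; any two flows in $D$ satisfying this identity coincide on the intersection of their domains, so there is a unique such flow with maximal domain. If moreover $f$ is a local $C^1$ diffeomorphism, then this maximal flow $\Phi$ is $C^1$ and is the (maximal) flow of the differential equation $$\dot x=F(x),\qquad F:D\to X,\quad F(x)=-f'(x)^{-1}\bigl(f(x)-f(x_0)\bigr).$$
   Context: A map is a local homeomorphism if every point has an open neighbourhood mapped homeomorphically onto an open set. A flow in $D$ is a map $\Phi:D_\Phi\to D$ such that: (i) $D_\Phi$ is an open subset of $D\times\mathbb R$ and $\Phi$ is continuous; (ii) for each $x\in D$, $\{t\in\mathbb R:(x,t)\in D_\Phi\}$ is an interval containing $0$; (iii) $\Phi(x,0)=x$ for all $x\in D$; (iv) if $(x,t_1),(x,t_1+t_2)\in D_\Phi$ then $(\Phi(x,t_1),t_2)\in D_\Phi$ and $\Phi(\Phi(x,t_1),t_2)=\Phi(x,t_1+t_2)$. $f$ is a local $C^1$ diffeomorphism if it is $C^1$ (Fréchet) and each point has an open neighbourhood mapped homeomorphically onto an open set with $C^1$ inverse; then $f'(x)$ is invertible for every $x$. *)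

(* Defs.v *)
From Stdlib Require Import Reals Lra.
Open Scope R_scope.
Set Implicit Arguments.

Record BanachSpace := {
  carrier :> Type;
  vzero : carrier;
  vadd : carrier -> carrier -> carrier;
  vopp : carrier -> carrier;
  vscal : R -> carrier -> carrier;
  vnorm : carrier -> R;
  vadd_assoc : forall x y z, vadd x (vadd y z) = vadd (vadd x y) z;
  vadd_comm : forall x y, vadd x y = vadd y x;
  vadd_zero : forall x, vadd x vzero = x;
  vadd_opp : forall x, vadd x (vopp x) = vzero;
  vscal_one : forall x, vscal 1 x = x;
  vscal_assoc : forall a b x, vscal a (vscal b x) = vscal (a * b) x;
  vscal_distr_v : forall a x y, vscal a (vadd x y) = vadd (vscal a x) (vscal a y);
  vscal_distr_s : forall a b x, vscal (a + b) x = vadd (vscal a x) (vscal b x);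
  vnorm_nonneg : forall x, 0 <= vnorm x;
  vnorm_eq0 : forall x, vnorm x = 0 -> x = vzero;
  vnorm_scal : forall a x, vnorm (vscal a x) = Rabs a * vnorm x;
  vnorm_triangle : forall x y, vnorm (vadd x y) <= vnorm x + vnorm y;
  vcomplete : forall u : nat -> carrier,
    (forall eps, 0 < eps -> exists N, forall n m, (N <= n)%nat -> (N <= m)%nat ->
        vnorm (vadd (u n) (vopp (u m))) < eps) ->
    exists l, forall eps, 0 < eps -> exists N, forall n, (N <= n)%nat ->
        vnorm (vadd (u n) (vopp l)) < eps
}.

Arguments vzero {b} : rename.
Arguments vadd {b} : rename.
Arguments vopp {b} : rename.
Arguments vscal {b} : rename.
Arguments vnorm {b} : rename.

Definition vsub {X : BanachSpace} (x y : X) : X := vadd x (vopp y).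

Section Topology.
Variables X Y : BanachSpace.

Definition is_open (U : X -> Prop) : Prop :=
  forall x, U x -> exists eps, 0 < eps /\ forall x', vnorm (vsub x' x) < eps -> U x'.

Definition is_open_XR (W : X -> R -> Prop) : Prop :=
  forall x t, W x t -> exists eps, 0 < eps /\
    forall x' t', vnorm (vsub x' x) < eps -> Rabs (t' - t) < eps -> W x' t'.

Definition is_connected (D : X -> Prop) : Prop :=
  forall U V : X -> Prop, is_open U -> is_open V ->
    (forall x, D x -> U x \/ V x) ->
    (exists x, D x /\ U x) -> (exists x, D x /\ V x) ->
    exists x, D x /\ U x /\ V x.

Definition image (f : X -> Y) (U : X -> Prop) : Y -> Prop :=
  fun y => exists x, U x /\ f x = y.

Definition continuous_on (U : X -> Prop) (f : X -> Y) : Prop :=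
  forall x, U x -> forall eps, 0 < eps -> exists delta, 0 < delta /\
    forall x', U x' -> vnorm (vsub x' x) < delta -> vnorm (vsub (f x') (f x)) < eps.

Definition injective_on (U : X -> Prop) (f : X -> Y) : Prop :=
  forall x x', U x -> U x' -> f x = f x' -> x = x'.

Definition bounded_linear (L : X -> Y) : Prop :=
  (forall x y, L (vadd x y) = vadd (L x) (L y)) /\
  (forall a x, L (vscal a x) = vscal a (L x)) /\
  (exists M, 0 <= M /\ forall x, vnorm (L x) <= M * vnorm x).

Definition frechet_at (U : X -> Prop) (f : X -> Y) (x : X) (L : X -> Y) : Prop :=
  bounded_linear L /\
  forall eps, 0 < eps -> exists delta, 0 < delta /\
    forall h, vnorm h < delta -> U (vadd x h) ->
      vnorm (vsub (vsub (f (vadd x h)) (f x)) (L h)) <= eps * vnorm h.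

Definition frechet_derivative_on (U : X -> Prop) (f : X -> Y) (Df : X -> X -> Y) : Prop :=
  forall x, U x -> frechet_at U f x (Df x).

(** f is C^1 on the open set U: Frechet differentiable with derivative
    continuous for the operator norm *)
Definition C1_on (U : X -> Prop) (f : X -> Y) : Prop :=
  exists Df : X -> X -> Y, frechet_derivative_on U f Df /\
    forall x, U x -> forall eps, 0 < eps -> exists delta, 0 < delta /\
      forall x', U x' -> vnorm (vsub x' x) < delta ->
        forall h, vnorm (vsub (Df x' h) (Df x h)) <= eps * vnorm h.

End Topology.

Arguments is_open {X}.
Arguments is_open_XR {X}.
Arguments is_connected {X}.
Arguments image {X Y}.
Arguments continuous_on {X Y}.
Arguments injective_on {X Y}.
Arguments bounded_linear {X Y}.
Arguments frechet_at {X Y}.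
Arguments frechet_derivative_on {X Y}.
Arguments C1_on {X Y}.

Definition local_homeomorphism {X Y : BanachSpace} (D : X -> Prop) (f : X -> Y) : Prop :=
  forall x, D x -> exists U : X -> Prop,
    is_open U /\ (forall u, U u -> D u) /\ U x /\
    is_open (image f U) /\ injective_on U f /\ continuous_on U f /\
    exists g : Y -> X,
      (forall v, image f U v -> U (g v) /\ f (g v) = v) /\
      continuous_on (image f U) g.

Definition local_C1_diffeomorphism {X Y : BanachSpace} (D : X -> Prop) (f : X -> Y) : Prop :=
  C1_on D f /\
  forall x, D x -> exists U : X -> Prop,
    is_open U /\ (forall u, U u -> D u) /\ U x /\
    is_open (image f U) /\ injective_on U f /\ continuous_on U f /\
    exists g : Y -> X,
      (forall v, image f U v -> U (g v) /\ f (g v) = v) /\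
      C1_on (image f U) g.

Definition is_flow_in {X : BanachSpace} (D : X -> Prop)
    (DPhi : X -> R -> Prop) (Phi : X -> R -> X) : Prop :=
  (forall x t, DPhi x t -> D x) /\
  is_open_XR DPhi /\
  (forall x t, DPhi x t -> D (Phi x t)) /\
  (forall x t, DPhi x t -> forall eps, 0 < eps -> exists delta, 0 < delta /\
     forall x' t', DPhi x' t' -> vnorm (vsub x' x) < delta -> Rabs (t' - t) < delta ->
       vnorm (vsub (Phi x' t') (Phi x t)) < eps) /\
  (forall x, D x -> DPhi x 0 /\
     forall a b t, DPhi x a -> DPhi x b -> a <= t <= b -> DPhi x t) /\
  (forall x, D x -> Phi x 0 = x) /\
  (forall x t1 t2, DPhi x t1 -> DPhi x (t1 + t2) ->
     DPhi (Phi x t1) t2 /\ Phi (Phi x t1) t2 = Phi x (t1 + t2)).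

Definition Psi {Y : BanachSpace} (y0 : Y) (y : Y) (t : R) : Y :=
  vadd y0 (vscal (exp (- t)) (vsub y y0)).

Definition conjugates {X Y : BanachSpace} (f : X -> Y) (y0 : Y)
    (DPhi : X -> R -> Prop) (Phi : X -> R -> X) : Prop :=
  forall x t, DPhi x t -> f (Phi x t) = Psi y0 (f x) t.

(** Phi is C^1 on the open set DPhi of X x R (Frechet derivative
    (h,s) |-> A x t h + s * B x t, continuous in operator norm) *)
Definition C1_on_XR {X : BanachSpace} (DPhi : X -> R -> Prop) (Phi : X -> R -> X) : Prop :=
  exists (A : X -> R -> X -> X) (B : X -> R -> X),
    forall x t, DPhi x t ->
      bounded_linear (A x t) /\
      (forall eps, 0 < eps -> exists delta, 0 < delta /\
        forall h s, vnorm h < delta -> Rabs s < delta -> DPhi (vadd x h) (t + s) ->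
          vnorm (vsub (vsub (Phi (vadd x h) (t + s)) (Phi x t))
                      (vadd (A x t h) (vscal s (B x t))))
            <= eps * Rmax (vnorm h) (Rabs s)) /\
      (forall eps, 0 < eps -> exists delta, 0 < delta /\
        forall x' t', DPhi x' t' -> vnorm (vsub x' x) < delta -> Rabs (t' - t) < delta ->
          (forall h, vnorm (vsub (A x' t' h) (A x t h)) <= eps * vnorm h) /\
          vnorm (vsub (B x' t') (B x t)) <= eps).

Definition curve_deriv_at {X : BanachSpace} (J : R -> Prop) (gamma : R -> X)
    (t : R) (v : X) : Prop :=
  forall eps, 0 < eps -> exists delta, 0 < delta /\
    forall s, Rabs s < delta -> J (t + s) ->
      vnorm (vsub (vsub (gamma (t + s)) (gamma t)) (vscal s v)) <= eps * Rabs s.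

Definition open_interval_R (J : R -> Prop) : Prop :=
  (forall t, J t -> exists eps, 0 < eps /\ forall t', Rabs (t' - t) < eps -> J t') /\
  (forall a b t, J a -> J b -> a <= t <= b -> J t).

Definition maximal_ode_flow {X : BanachSpace} (D : X -> Prop) (F : X -> X)
    (DPhi : X -> R -> Prop) (Phi : X -> R -> X) : Prop :=
  forall x, D x ->
    (forall t, DPhi x t -> curve_deriv_at (DPhi x) (Phi x) t (F (Phi x t))) /\
    (forall (J : R -> Prop) (gamma : R -> X),
       open_interval_R J -> J 0 -> gamma 0 = x ->
       (forall t, J t -> D (gamma t)) ->
       (forall t, J t -> curve_deriv_at J gamma t (F (gamma t))) ->
       forall t, J t -> DPhi x t /\ gamma t = Phi x t).

(* Main.v *)
Require Import Defs.
From Stdlib Require Import Reals Lra ClassicalEpsilon Classical.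
Open Scope R_scope.


Section Alg.
Variable B : BanachSpace.
Implicit Types x y z u v : B.

Lemma v0l x : vadd vzero x = x.
Proof. rewrite vadd_comm; apply vadd_zero. Qed.
Lemma vopp_l x : vadd (vopp x) x = vzero.
Proof. rewrite vadd_comm; apply vadd_opp. Qed.
Lemma vadd_cancel_l x y z : vadd x y = vadd x z -> y = z.
Proof.
  intro H. assert (H0 : vadd (vopp x) (vadd x y) = vadd (vopp x) (vadd x z)) by (rewrite H; auto).
  rewrite !vadd_assoc, vopp_l, !v0l in H0. exact H0.
Qed.
Lemma vscal0 x : vscal 0 x = vzero.
Proof.
  apply (vadd_cancel_l (vscal 0 x)). rewrite vadd_zero, <- vscal_distr_s.
  f_equal; ring.
Qed.
Lemma vscal_v0 a : vscal a (@vzero B) = vzero.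
Proof. rewrite <- (vscal0 vzero) at 1. rewrite vscal_assoc, Rmult_0_r. apply vscal0. Qed.
Lemma vopp_scal x : vopp x = vscal (-1) x.
Proof.
  apply (vadd_cancel_l x). rewrite vadd_opp.
  rewrite <- (vscal_one _ x) at 1. rewrite <- vscal_distr_s.
  replace (1 + -1) with 0 by ring. symmetry; apply vscal0.
Qed.
Lemma vnorm0 : vnorm (@vzero B) = 0.
Proof. rewrite <- (vscal0 vzero), vnorm_scal, Rabs_R0; ring. Qed.
Lemma vnorm_opp x : vnorm (vopp x) = vnorm x.
Proof. rewrite vopp_scal, vnorm_scal, Rabs_left by lra; ring. Qed.
Lemma vopp_opp x : vopp (vopp x) = x.
Proof. rewrite !vopp_scal, vscal_assoc. replace (-1 * -1) with 1 by ring. apply vscal_one. Qed.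
Lemma vopp_add x y : vopp (vadd x y) = vadd (vopp x) (vopp y).
Proof. rewrite !vopp_scal. apply vscal_distr_v. Qed.
Lemma vopp0 : vopp (@vzero B) = vzero.
Proof. rewrite vopp_scal; apply vscal_v0. Qed.
Lemma vsub_self x : vsub x x = vzero.
Proof. apply vadd_opp. Qed.
Lemma vsub_0 x : vsub x vzero = x.
Proof. unfold vsub; rewrite vopp0; apply vadd_zero. Qed.
Lemma vsub_0l x : vsub vzero x = vopp x.
Proof. unfold vsub; apply v0l. Qed.
Lemma vsub_add_cancel x y : vadd (vsub x y) y = x.
Proof. unfold vsub. rewrite <- vadd_assoc, vopp_l, vadd_zero. auto. Qed.
Lemma vadd_sub_cancel x y : vsub (vadd x y) y = x.
Proof. unfold vsub. rewrite <- vadd_assoc, vadd_opp, vadd_zero. auto. Qed.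
Lemma vadd_sub_cancel_l x y : vsub (vadd x y) x = y.
Proof. rewrite vadd_comm; apply vadd_sub_cancel. Qed.
Lemma vadd_sub_r x y : vadd x (vsub y x) = y.
Proof. rewrite vadd_comm; apply vsub_add_cancel. Qed.
Lemma vsub_eq x y : vsub x y = vzero -> x = y.
Proof. intro H. rewrite <- (vsub_add_cancel x y), H. apply v0l. Qed.
Lemma vsub_chasles x y z : vsub x z = vadd (vsub x y) (vsub y z).
Proof.
  unfold vsub. rewrite vadd_assoc. f_equal. rewrite <- vadd_assoc, vopp_l, vadd_zero. auto.
Qed.
Lemma vsub_tri x y z : vnorm (vsub x z) <= vnorm (vsub x y) + vnorm (vsub y z).
Proof. rewrite (vsub_chasles x y z). apply vnorm_triangle. Qed.
Lemma vsub_swap x y : vsub y x = vopp (vsub x y).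
Proof.
  unfold vsub. rewrite vopp_add, vopp_opp, vadd_comm. auto.
Qed.
Lemma vsub_sym x y : vnorm (vsub x y) = vnorm (vsub y x).
Proof. rewrite (vsub_swap y x), vnorm_opp; auto. Qed.
Lemma vnorm_sub_ge x y : vnorm x - vnorm y <= vnorm (vsub x y).
Proof.
  pose proof (vnorm_triangle _ (vsub x y) y). rewrite vsub_add_cancel in H. lra.
Qed.
Lemma vnorm_sub_le x y : vnorm (vsub x y) <= vnorm x + vnorm y.
Proof. unfold vsub. rewrite <- (vnorm_opp y). apply vnorm_triangle. Qed.
Lemma veq_small x y : (forall eps, 0 < eps -> vnorm (vsub x y) <= eps) -> x = y.
Proof.
  intro H. apply vsub_eq. apply vnorm_eq0.
  pose proof (vnorm_nonneg _ (vsub x y)).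
  destruct (Rle_lt_or_eq_dec _ _ H0) as [Hl|Hl]; [|auto].
  specialize (H (vnorm (vsub x y) / 2)). assert (0 < vnorm (vsub x y) / 2) by lra. specialize (H H1). exfalso. lra.
Qed.
Lemma vscal_sub a x y : vscal a (vsub x y) = vsub (vscal a x) (vscal a y).
Proof. unfold vsub. rewrite vscal_distr_v. f_equal. rewrite !vopp_scal, !vscal_assoc. f_equal; ring. Qed.
Lemma vscal_sub_s a b x : vscal (a - b) x = vsub (vscal a x) (vscal b x).
Proof. unfold vsub, Rminus. rewrite vscal_distr_s. f_equal. rewrite vopp_scal, vscal_assoc. f_equal; ring. Qed.
Lemma vscal_opp a x : vscal a (vopp x) = vopp (vscal a x).
Proof. rewrite !vopp_scal, !vscal_assoc. f_equal; ring. Qed.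
Lemma vscal_oppr a x : vscal (- a) x = vopp (vscal a x).
Proof. rewrite !vopp_scal, !vscal_assoc. f_equal; ring. Qed.
Lemma vsub_add_add x y z u : vsub (vadd x y) (vadd z u) = vadd (vsub x z) (vsub y u).
Proof.
  unfold vsub. rewrite vopp_add. rewrite !vadd_assoc. f_equal.
  rewrite <- !vadd_assoc. f_equal. apply vadd_comm.
Qed.
Lemma vsub_sub_sub x y z : vsub (vsub x y) (vsub z y) = vsub x z.
Proof.
  unfold vsub. rewrite vopp_add, vopp_opp. rewrite (vadd_comm _ (vopp z) y), vadd_assoc.
  rewrite <- (vadd_assoc _ x (vopp y) y), vopp_l, vadd_zero. auto.
Qed.
Lemma vsub_add_l x y z : vsub (vadd x y) (vadd x z) = vsub y z.
Proof. rewrite vsub_add_add, vsub_self, v0l. auto. Qed.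
Lemma vsub_opp x y : vsub (vopp x) (vopp y) = vopp (vsub x y).
Proof. unfold vsub. rewrite vopp_add. auto. Qed.
Lemma vsub_opp_r x y : vsub x (vopp y) = vadd x y.
Proof. unfold vsub; rewrite vopp_opp; auto. Qed.
Lemma vadd_opp_sub x y : vadd (vopp x) y = vsub y x.
Proof. unfold vsub; apply vadd_comm. Qed.
Lemma vnorm_scal_le a x M : Rabs a <= M -> vnorm (vscal a x) <= M * vnorm x.
Proof. intro H. rewrite vnorm_scal. apply Rmult_le_compat_r; [apply vnorm_nonneg|auto]. Qed.
Lemma vnorm_ball_tri x y z a b : vnorm (vsub x y) < a -> vnorm (vsub y z) < b -> vnorm (vsub x z) < a + b.
Proof. intros. pose proof (vsub_tri x y z). lra. Qed.
End Alg.

Arguments v0l {B}.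
Arguments veq_small {B}.

Section Lin.
Variables X Y : BanachSpace.
Lemma lin_0 (L : X -> Y) : bounded_linear L -> L vzero = vzero.
Proof.
  intros [Ha _]. apply (vadd_cancel_l _ (L vzero)). rewrite <- Ha, !vadd_zero. auto.
Qed.
Lemma lin_opp (L : X -> Y) x : bounded_linear L -> L (vopp x) = vopp (L x).
Proof. intros HL. rewrite !vopp_scal. destruct HL as [_ [Hs _]]. apply Hs. Qed.
Lemma lin_sub (L : X -> Y) x y : bounded_linear L -> L (vsub x y) = vsub (L x) (L y).
Proof. intros HL. unfold vsub. rewrite <- lin_opp by auto. destruct HL as [Ha _]. apply Ha. Qed.
Lemma lin_scal (L : X -> Y) a x : bounded_linear L -> L (vscal a x) = vscal a (L x).
Proof. intros [_ [Hs _]]. apply Hs. Qed.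
Lemma lin_add (L : X -> Y) x y : bounded_linear L -> L (vadd x y) = vadd (L x) (L y).
Proof. intros [Ha _]. apply Ha. Qed.
Lemma lin_bound (L : X -> Y) : bounded_linear L -> exists M, 0 < M /\ forall x, vnorm (L x) <= M * vnorm x.
Proof.
  intros [_ [_ [M [HM H]]]]. exists (M + 1). split. lra. intro x. specialize (H x).
  pose proof (vnorm_nonneg _ x). nra.
Qed.
End Lin.
Arguments lin_0 {X Y L}. Arguments lin_opp {X Y L x}. Arguments lin_sub {X Y L x y}.
Arguments lin_scal {X Y L a x}. Arguments lin_add {X Y L x y}. Arguments lin_bound {X Y L}.

Lemma lin_comp (X Y Z : BanachSpace) (L : X -> Y) (M : Y -> Z) :
  bounded_linear L -> bounded_linear M -> bounded_linear (fun x => M (L x)).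
Proof.
  intros HL HM. split; [|split].
  - intros. rewrite (lin_add HL), (lin_add HM). auto.
  - intros. rewrite (lin_scal HL), (lin_scal HM). auto.
  - destruct (lin_bound HL) as [a [Ha Hla]]. destruct (lin_bound HM) as [b [Hb Hlb]].
    exists (b * a). split. nra. intro x. eapply Rle_trans. apply Hlb. rewrite Rmult_assoc.
    apply Rmult_le_compat_l; [lra|apply Hla].
Qed.


Lemma exp_deriv t eps : 0 < eps -> exists delta, 0 < delta /\
  forall s, Rabs s < delta -> Rabs (exp (t + s) - exp t - s * exp t) <= eps * Rabs s.
Proof.
  intro He. destruct (derivable_pt_lim_exp t eps He) as [d Hd].
  exists d. split. apply cond_pos. intros s Hs.
  destruct (Req_dec s 0) as [->|Hs0].
  - rewrite Rplus_0_r. replace (exp t - exp t - 0 * exp t) with 0 by ring.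
    rewrite Rabs_R0. lra.
  - specialize (Hd s Hs0 Hs).
    replace (exp (t + s) - exp t - s * exp t) with (s * ((exp (t + s) - exp t) / s - exp t)) by (field; auto).
    rewrite Rabs_mult. rewrite Rmult_comm. apply Rmult_le_compat_r. apply Rabs_pos. lra.
Qed.

Lemma exp_cont t eps : 0 < eps -> exists delta, 0 < delta /\
  forall t', Rabs (t' - t) < delta -> Rabs (exp t' - exp t) < eps.
Proof.
  intro He. destruct (exp_deriv t 1 Rlt_0_1) as [d [Hd H]].
  pose proof (exp_pos t).
  exists (Rmin d (eps / (exp t + 2))). split.
  - apply Rmin_pos; auto. apply Rdiv_lt_0_compat; lra.
  - intros t' Ht'. specialize (H (t' - t)).
    assert (Rabs (t' - t) < d) by (eapply Rlt_le_trans; [apply Ht'|apply Rmin_l]).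
    specialize (H H1). replace (t + (t' - t)) with t' in H by ring.
    assert (Rabs (t' - t) < eps / (exp t + 2)) by (eapply Rlt_le_trans; [apply Ht'|apply Rmin_r]).
    assert (Rabs (t' - t) * (exp t + 2) < eps).
    { apply (Rmult_lt_compat_r (exp t + 2)) in H2; [|lra]. field_simplify in H2; lra. }
    pose proof (Rabs_triang (exp t' - exp t - (t' - t) * exp t) ((t' - t) * exp t)).
    replace (exp t' - exp t - (t' - t) * exp t + (t' - t) * exp t) with (exp t' - exp t) in H4 by ring.
    rewrite Rabs_mult, (Rabs_right (exp t)) in H4 by lra.
    pose proof (Rabs_pos (t' - t)). nra.
Qed.

Lemma expm_deriv t eps : 0 < eps -> exists delta, 0 < delta /\
  forall s, Rabs s < delta -> Rabs (exp (- (t + s)) - exp (- t) + s * exp (- t)) <= eps * Rabs s.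
Proof.
  intro He. destruct (exp_deriv (- t) eps He) as [d [Hd H]]. exists d. split; auto.
  intros s Hs. specialize (H (- s)). rewrite Rabs_Ropp in H. specialize (H Hs).
  replace (- (t + s)) with (- t + - s) by ring.
  replace (exp (- t + - s) - exp (- t) + s * exp (- t)) with (exp (- t + - s) - exp (- t) - - s * exp (- t)) by ring.
  auto.
Qed.

Lemma expm_cont t eps : 0 < eps -> exists delta, 0 < delta /\
  forall t', Rabs (t' - t) < delta -> Rabs (exp (- t') - exp (- t)) < eps.
Proof.
  intro He. destruct (exp_cont (- t) eps He) as [d [Hd H]]. exists d. split; auto.
  intros t' Ht. apply H. replace (- t' - - t) with (- (t' - t)) by ring. rewrite Rabs_Ropp; auto.
Qed.

Section PsiL.
Variable Y : BanachSpace.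
Variable y0 : Y.

Lemma Psi_0 y : Psi y0 y 0 = y.
Proof. unfold Psi. rewrite Ropp_0, exp_0, vscal_one. apply vadd_sub_r. Qed.

Lemma Psi_sub y t : vsub (Psi y0 y t) y0 = vscal (exp (- t)) (vsub y y0).
Proof. unfold Psi. apply vadd_sub_cancel_l. Qed.

Lemma Psi_comp y t1 t2 : Psi y0 (Psi y0 y t1) t2 = Psi y0 y (t1 + t2).
Proof.
  unfold Psi at 1. rewrite Psi_sub, vscal_assoc, <- exp_plus.
  unfold Psi. do 3 f_equal. ring.
Qed.

Lemma Psi_diff y y' t t' : vsub (Psi y0 y' t') (Psi y0 y t) =
  vadd (vscal (exp (- t')) (vsub y' y)) (vscal (exp (- t') - exp (- t)) (vsub y y0)).
Proof.
  rewrite <- (vsub_sub_sub _ (Psi y0 y' t') y0 (Psi y0 y t)), !Psi_sub.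
  rewrite vscal_sub_s.
  replace (vadd (vscal (exp (- t')) (vsub y' y)) (vsub (vscal (exp (- t')) (vsub y y0)) (vscal (exp (- t)) (vsub y y0))))
    with (vsub (vadd (vscal (exp (- t')) (vsub y' y)) (vscal (exp (- t')) (vsub y y0))) (vscal (exp (- t)) (vsub y y0)))
    by (unfold vsub; symmetry; apply vadd_assoc).
  rewrite <- vscal_distr_v, <- vsub_chasles. auto.
Qed.

Lemma Psi_cont y t eps : 0 < eps -> exists delta, 0 < delta /\
  forall y' t', vnorm (vsub y' y) < delta -> Rabs (t' - t) < delta ->
    vnorm (vsub (Psi y0 y' t') (Psi y0 y t)) < eps.
Proof.
  intro He. set (K := vnorm (vsub y y0)). assert (HK : 0 <= K) by apply vnorm_nonneg.
  destruct (expm_cont t (Rmin 1 (eps / (2 * (K + 1)))) ) as [d1 [Hd1 H1]].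
  { apply Rmin_pos. lra. apply Rdiv_lt_0_compat; lra. }
  pose proof (exp_pos (- t)).
  exists (Rmin d1 (eps / (2 * (exp (- t) + 1)))). split.
  { apply Rmin_pos; auto. apply Rdiv_lt_0_compat; lra. }
  intros y' t' Hy Ht.
  assert (Ht1 : Rabs (t' - t) < d1) by (eapply Rlt_le_trans; [apply Ht|apply Rmin_l]).
  assert (Hy1 : vnorm (vsub y' y) < eps / (2 * (exp (- t) + 1))) by (eapply Rlt_le_trans; [apply Hy|apply Rmin_r]).
  specialize (H1 _ Ht1). 
  assert (Ha : Rabs (exp (- t') - exp (- t)) < 1) by (eapply Rlt_le_trans; [apply H1|apply Rmin_l]).
  assert (Hb : Rabs (exp (- t') - exp (- t)) < eps / (2 * (K + 1))) by (eapply Rlt_le_trans; [apply H1|apply Rmin_r]).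
  rewrite Psi_diff. eapply Rle_lt_trans. apply vnorm_triangle. rewrite !vnorm_scal.
  fold K. pose proof (exp_pos (- t')). rewrite (Rabs_right (exp (- t'))) by lra.
  assert (exp (- t') < exp (- t) + 1) by (apply Rabs_def2 in Ha; lra).
  assert (Hc : exp (- t') * vnorm (vsub y' y) <= (exp (- t) + 1) * vnorm (vsub y' y)).
  { apply Rmult_le_compat_r. apply vnorm_nonneg. lra. }
  assert (Hd : (exp (- t) + 1) * vnorm (vsub y' y) < eps / 2).
  { apply (Rmult_lt_compat_l (exp (- t) + 1)) in Hy1; [|lra].
    replace ((exp (- t) + 1) * (eps / (2 * (exp (- t) + 1)))) with (eps / 2) in Hy1 by (field; lra). auto. }
  assert (He2 : Rabs (exp (- t') - exp (- t)) * K <= eps / 2).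
  { apply Rle_trans with (eps / (2 * (K + 1)) * K). apply Rmult_le_compat_r; lra.
    apply Rle_trans with (eps / (2 * (K + 1)) * (K + 1)). apply Rmult_le_compat_l. apply Rlt_le, Rdiv_lt_0_compat; lra. lra.
    right. field. lra. }
  lra.
Qed.
End PsiL.


Definition ccont {X : BanachSpace} (I : R -> Prop) (c : R -> X) :=
  forall t, I t -> forall eps, 0 < eps -> exists delta, 0 < delta /\
    forall t', I t' -> Rabs (t' - t) < delta -> vnorm (vsub (c t') (c t)) < eps.
Definition interval (I : R -> Prop) := forall a b t, I a -> I b -> a <= t <= b -> I t.

Lemma Rlt_min3 a b c : 0 < a -> 0 < b -> 0 < c -> 0 < Rmin a (Rmin b c).
Proof. intros; repeat apply Rmin_pos; auto. Qed.

Lemma ball_sub {X : BanachSpace} (U : X -> Prop) : is_open U -> forall p, U p ->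
  exists r, 0 < r /\ forall x, vnorm (vsub x p) < r -> U x.
Proof. intros H p Hp. apply H; auto. Qed.

Section Uniq.
Variables X Y : BanachSpace.
Variable D : X -> Prop.
Variable f : X -> Y.
Hypothesis Hloc : local_homeomorphism D f.

Lemma lift_uniq_fwd (I : R -> Prop) (c1 c2 : R -> X) t0 t1 :
  interval I -> ccont I c1 -> ccont I c2 ->
  (forall t, I t -> D (c1 t) /\ D (c2 t)) -> (forall t, I t -> f (c1 t) = f (c2 t)) ->
  I t0 -> c1 t0 = c2 t0 -> I t1 -> t0 <= t1 -> c1 t1 = c2 t1.
Proof.
  intros HI Hc1 Hc2 HD Hf H0 Heq0 H1 Hle.
  set (E := fun u => t0 <= u <= t1 /\ forall v, t0 <= v <= u -> c1 v = c2 v).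
  assert (HE0 : E t0). { split. lra. intros v Hv. replace v with t0 by lra. auto. }
  assert (Hb : bound E). { exists t1. intros u [Hu _]. lra. }
  destruct (completeness E Hb (ex_intro _ t0 HE0)) as [s [Hub Hlub]].
  assert (Hs0 : t0 <= s) by (apply Hub; auto).
  assert (Hs1 : s <= t1). { apply Hlub. intros u [Hu _]. lra. }
  assert (HIs : forall v, t0 <= v <= t1 -> I v). { intros v Hv. apply (HI t0 t1); auto. }
  assert (Hbelow : forall v, t0 <= v < s -> c1 v = c2 v).
  { intros v Hv. destruct (classic (exists u, E u /\ v < u)) as [[u [[_ Hu] Hvu]]|Hn].
    - apply Hu. lra.
    - exfalso. assert (s <= v). { apply Hlub. intros u Hu. destruct (Rle_dec u v); auto.
        exfalso; apply Hn; exists u; split; auto; lra. } lra. }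
  assert (Hseq : c1 s = c2 s).
  { destruct (Req_dec s t0) as [->|Hst]; auto.
    apply veq_small. intros eps He.
    destruct (Hc1 s (HIs s ltac:(lra)) (eps/2) ltac:(lra)) as [d1 [Hd1 Hcc1]].
    destruct (Hc2 s (HIs s ltac:(lra)) (eps/2) ltac:(lra)) as [d2 [Hd2 Hcc2]].
    set (v := Rmax t0 (s - Rmin d1 d2 / 2)).
    assert (Hm : 0 < Rmin d1 d2) by (apply Rmin_pos; auto).
    assert (Hv1 : t0 <= v < s). { unfold v. split. apply Rmax_l. apply Rmax_lub_lt; lra. }
    assert (Hv2 : Rabs (v - s) < Rmin d1 d2).
    { assert (v >= s - Rmin d1 d2 / 2) by (unfold v; apply Rle_ge, Rmax_r).
      apply Rabs_def1; lra. }
    pose proof (Rmin_l d1 d2). pose proof (Rmin_r d1 d2).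
    specialize (Hcc1 v (HIs v ltac:(lra)) ltac:(lra)). specialize (Hcc2 v (HIs v ltac:(lra)) ltac:(lra)).
    rewrite (vsub_chasles _ (c1 s) (c1 v) (c2 s)). rewrite (Hbelow v Hv1) at 2.
    eapply Rle_trans. apply vnorm_triangle. rewrite vsub_sym. lra. }
  assert (HEs : E s). { split. lra. intros v Hv. destruct (Req_dec v s) as [->|]; auto. apply Hbelow. lra. }
  destruct (Req_dec s t1) as [<-|Hst1]. { apply HEs. lra. }
  exfalso.
  destruct (Hloc (c1 s)) as [U [HUo [HUD [HUp [_ [Hinj _]]]]]]. apply (HD s); apply HIs; lra.
  destruct (HUo _ HUp) as [r [Hr HUb]].
  destruct (Hc1 s (HIs s ltac:(lra)) r Hr) as [d1 [Hd1 Hcc1]].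
  destruct (Hc2 s (HIs s ltac:(lra)) r Hr) as [d2 [Hd2 Hcc2]].
  assert (Hm : 0 < Rmin d1 d2) by (apply Rmin_pos; auto).
  pose proof (Rmin_l d1 d2). pose proof (Rmin_r d1 d2).
  set (u := Rmin t1 (s + Rmin d1 d2 / 2)).
  assert (Hu : s < u). { unfold u. apply Rmin_glb_lt; lra. }
  assert (Hu2 : u <= t1) by apply Rmin_l.
  assert (Hu3 : u <= s + Rmin d1 d2 / 2) by apply Rmin_r.
  assert (E u).
  { split. lra. intros v Hv. destruct (Rle_dec v s). apply HEs; lra.
    assert (Hvs : Rabs (v - s) < Rmin d1 d2) by (apply Rabs_def1; lra).
    apply Hinj.
    - apply HUb. apply Hcc1. apply HIs; lra. lra.
    - apply HUb. rewrite Hseq. apply Hcc2. apply HIs; lra. lra.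
    - apply Hf. apply HIs; lra. }
  specialize (Hub u H3). lra.
Qed.

Lemma ccont_refl (I : R -> Prop) (c : R -> X) : ccont I c ->
  ccont (fun t => I (- t)) (fun t => c (- t)).
Proof.
  intros H t Ht eps He. destruct (H _ Ht eps He) as [d [Hd Hc]]. exists d. split; auto.
  intros t' Ht' Htt. apply Hc; auto. replace (- t' - - t) with (- (t' - t)) by ring. rewrite Rabs_Ropp; auto.
Qed.

Lemma lift_uniq (I : R -> Prop) (c1 c2 : R -> X) t0 t1 :
  interval I -> ccont I c1 -> ccont I c2 ->
  (forall t, I t -> D (c1 t) /\ D (c2 t)) -> (forall t, I t -> f (c1 t) = f (c2 t)) ->
  I t0 -> c1 t0 = c2 t0 -> I t1 -> c1 t1 = c2 t1.
Proof.
  intros HI Hc1 Hc2 HD Hf H0 Heq0 H1.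
  destruct (Rle_dec t0 t1) as [Hl|Hl]. { apply (lift_uniq_fwd I c1 c2 t0 t1); auto. } apply Rnot_le_lt in Hl.
  replace t1 with (- - t1) by ring.
  apply (lift_uniq_fwd (fun t => I (- t)) (fun t => c1 (- t)) (fun t => c2 (- t)) (- t0) (- t1)).
  - intros a b t Ha Hb Ht. apply (HI (- b) (- a)); auto. lra.
  - apply ccont_refl; auto.
  - apply ccont_refl; auto.
  - intros; auto.
  - intros; auto.
  - rewrite Ropp_involutive; auto.
  - rewrite Ropp_involutive; auto.
  - rewrite Ropp_involutive; auto.
  - lra.
Qed.
End Uniq.


Definition jcont {X : BanachSpace} (E : X -> R -> Prop) (P : X -> R -> X) :=
  forall x t, E x t -> forall eps, 0 < eps -> exists delta, 0 < delta /\
     forall x' t', E x' t' -> vnorm (vsub x' x) < delta -> Rabs (t' - t) < delta ->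
       vnorm (vsub (P x' t') (P x t)) < eps.

Definition between (a b s : R) := (a <= s <= b) \/ (b <= s <= a).

Lemma between_interval a b : interval (between a b).
Proof. intros u v t Hu Hv Ht. unfold between in *. lra. Qed.

Lemma interval_inter (I1 I2 : R -> Prop) : interval I1 -> interval I2 -> interval (fun t => I1 t /\ I2 t).
Proof. intros H1 H2 a b t [Ha1 Ha2] [Hb1 Hb2] Ht. split; [apply (H1 a b)|apply (H2 a b)]; auto. Qed.

Lemma interval_union (I1 I2 : R -> Prop) c : interval I1 -> interval I2 -> I1 c -> I2 c ->
  interval (fun t => I1 t \/ I2 t).
Proof.
  intros H1 H2 Hc1 Hc2 a b t Ha Hb Ht.
  destruct (Rle_dec t c).
  - destruct Ha as [Ha|Ha]; [left; apply (H1 a c)|right; apply (H2 a c)]; auto; lra.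
  - destruct Hb as [Hb|Hb]; [left; apply (H1 c b)|right; apply (H2 c b)]; auto; lra.
Qed.

Lemma ccont_sub {X : BanachSpace} (I J : R -> Prop) (c : R -> X) :
  (forall t, J t -> I t) -> ccont I c -> ccont J c.
Proof.
  intros HJ H t Ht eps He. destruct (H t (HJ t Ht) eps He) as [d [Hd Hc]].
  exists d; split; auto.
Qed.

Lemma vnorm_sub_self_lt {X : BanachSpace} (x : X) d : 0 < d -> vnorm (vsub x x) < d.
Proof. intro. rewrite vsub_self, vnorm0. auto. Qed.

Lemma Rabs_self_lt t d : 0 < d -> Rabs (t - t) < d.
Proof. intro. rewrite Rminus_diag_eq, Rabs_R0; auto. Qed.

Lemma Psi_diff_same {Y : BanachSpace} (y0 y y' : Y) s :
  vsub (Psi y0 y' s) (Psi y0 y s) = vscal (exp (- s)) (vsub y' y).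
Proof. rewrite Psi_diff. rewrite Rminus_diag_eq, vscal0, vadd_zero; auto. Qed.

Section Flow.
Variables X Y : BanachSpace.
Variable D : X -> Prop.
Variable f : X -> Y.
Variable y0 : Y.
Hypothesis HDo : is_open D.
Hypothesis Hloc : local_homeomorphism D f.

Definition good (E : X -> R -> Prop) (P : X -> R -> X) :=
  (forall x t, E x t -> D x) /\ is_open_XR E /\ (forall x t, E x t -> D (P x t)) /\
  jcont E P /\ (forall x t, E x t -> E x 0) /\ (forall x, interval (E x)) /\
  (forall x, E x 0 -> P x 0 = x) /\ conjugates f y0 E P.

Lemma good_sec_cont E P x : good E P -> ccont (E x) (P x).
Proof.
  intros [_ [_ [_ [Hc _]]]] t Ht eps He. destruct (Hc x t Ht eps He) as [d [Hd H]].
  exists d; split; auto. intros t' Ht' Htt. apply H; auto. apply vnorm_sub_self_lt; auto.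
Qed.

Lemma good_consistent E1 P1 E2 P2 x t : good E1 P1 -> good E2 P2 -> E1 x t -> E2 x t ->
  P1 x t = P2 x t.
Proof.
  intros G1 G2 H1 H2.
  pose proof G1 as [HD1 [_ [HPD1 [_ [H01 [HI1 [HP01 Hcj1]]]]]]].
  pose proof G2 as [HD2 [_ [HPD2 [_ [H02 [HI2 [HP02 Hcj2]]]]]]].
  apply (lift_uniq X Y D f Hloc (fun s => E1 x s /\ E2 x s) (P1 x) (P2 x) 0 t).
  - apply interval_inter; auto.
  - eapply ccont_sub; [|apply good_sec_cont; eauto]. simpl; tauto.
  - eapply ccont_sub; [|apply good_sec_cont; eauto]. simpl; tauto.
  - intros s [Hs1 Hs2]; split; eauto.
  - intros s [Hs1 Hs2]. rewrite Hcj1, Hcj2; auto.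
  - split; eauto.
  - rewrite HP01, HP02; eauto.
  - split; auto.
Qed.

Definition Estar x t := exists E P, good E P /\ E x t.
Definition Pstar x t : X := epsilon (inhabits x) (fun p => exists E P, good E P /\ E x t /\ P x t = p).

Lemma Pstar_eq E P x t : good E P -> E x t -> Pstar x t = P x t.
Proof.
  intros G H. unfold Pstar.
  destruct (epsilon_spec (inhabits x) (fun p => exists E P, good E P /\ E x t /\ P x t = p)) as [E' [P' [G' [H' Hp]]]].
  { exists (P x t), E, P; auto. }
  rewrite <- Hp. eapply good_consistent; eauto.
Qed.

Lemma good_star : good Estar Pstar.
Proof.
  split; [|split; [|split; [|split; [|split; [|split; [|split]]]]]].
  - intros x t [E [P [[HD _] H]]]; eauto.
  - intros x t [E [P [G H]]]. pose proof G as [_ [Ho _]].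
    destruct (Ho x t H) as [e [He Hb]]. exists e; split; auto.
    intros x' t' H1 H2. exists E, P; split; auto.
  - intros x t [E [P [G H]]]. rewrite (Pstar_eq E P) by auto. destruct G as [_ [_ [HPD _]]]; eauto.
  - intros x t [E [P [G H]]] eps He. pose proof G as [_ [Ho [_ [Hc _]]]].
    destruct (Ho x t H) as [e1 [He1 Hb]]. destruct (Hc x t H eps He) as [e2 [He2 Hc2]].
    exists (Rmin e1 e2). split. apply Rmin_pos; auto.
    intros x' t' _ Hx Ht. pose proof (Rmin_l e1 e2). pose proof (Rmin_r e1 e2).
    assert (E x' t') by (apply Hb; lra).
    rewrite (Pstar_eq E P x t), (Pstar_eq E P x' t') by auto. apply Hc2; auto; lra.
  - intros x t [E [P [G H]]]. exists E, P; split; auto. destruct G as [_ [_ [_ [_ [H0 _]]]]]; eauto.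
  - intros x a b t [E1 [P1 [G1 H1]]] [E2 [P2 [G2 H2]]] Ht.
    pose proof G1 as [_ [_ [_ [_ [H01 [HI1 _]]]]]]. pose proof G2 as [_ [_ [_ [_ [H02 [HI2 _]]]]]].
    destruct (Rle_dec 0 t).
    + exists E2, P2; split; auto. apply (HI2 x 0 b); eauto. lra.
    + exists E1, P1; split; auto. apply (HI1 x a 0); eauto. lra.
  - intros x [E [P [G H]]]. rewrite (Pstar_eq E P) by auto. destruct G as [_ [_ [_ [_ [_ [_ [HP0 _]]]]]]]; auto.
  - intros x t [E [P [G H]]]. rewrite (Pstar_eq E P) by auto. destruct G as [_ [_ [_ [_ [_ [_ [_ Hcj]]]]]]]; auto.
Qed.

Lemma good_sub E P x t : good E P -> E x t -> Estar x t.
Proof. intros; exists E, P; auto. Qed.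


Lemma f_cont x : D x -> forall eps, 0 < eps -> exists delta, 0 < delta /\
  forall x', vnorm (vsub x' x) < delta -> D x' /\ vnorm (vsub (f x') (f x)) < eps.
Proof.
  intros Hx eps He.
  destruct (Hloc x Hx) as [U [HUo [HUD [HUx [_ [_ [Hfc _]]]]]]].
  destruct (HUo x HUx) as [r [Hr Hb]].
  destruct (Hfc x HUx eps He) as [d [Hd Hc]].
  exists (Rmin r d). split. apply Rmin_pos; auto.
  intros x' Hx'. pose proof (Rmin_l r d). pose proof (Rmin_r r d).
  assert (U x') by (apply Hb; lra). split; auto. apply Hc; auto; lra.
Qed.

Lemma chart_gf (U : X -> Prop) (g : Y -> X) q : injective_on U f ->
  (forall v, image f U v -> U (g v) /\ f (g v) = v) -> U q -> g (f q) = q.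
Proof.
  intros Hinj Hg Hq. assert (Hi : image f U (f q)) by (exists q; auto).
  destruct (Hg _ Hi) as [H1 H2]. apply Hinj; auto.
Qed.

Lemma box_open (c : X) rho a b : is_open_XR (fun x' t => vnorm (vsub x' c) < rho /\ a < t < b).
Proof.
  intros x' t [Hx Ht]. exists (Rmin (rho - vnorm (vsub x' c)) (Rmin (t - a) (b - t))).
  split. repeat apply Rmin_pos; lra.
  intros x'' t'' H1 H2. pose proof (Rmin_l (rho - vnorm (vsub x' c)) (Rmin (t - a) (b - t))).
  pose proof (Rmin_r (rho - vnorm (vsub x' c)) (Rmin (t - a) (b - t))).
  pose proof (Rmin_l (t - a) (b - t)). pose proof (Rmin_r (t - a) (b - t)).
  split. pose proof (vsub_tri _ x'' x' c). lra.
  apply Rabs_def2 in H2. lra.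
Qed.

Lemma PB_cont (V : Y -> Prop) (g : Y -> X) x' t : continuous_on V g -> D x' ->
  V (Psi y0 (f x') t) -> forall eps, 0 < eps -> exists delta, 0 < delta /\
  forall x'' t'', vnorm (vsub x'' x') < delta -> Rabs (t'' - t) < delta -> V (Psi y0 (f x'') t'') ->
    vnorm (vsub (g (Psi y0 (f x'') t'')) (g (Psi y0 (f x') t))) < eps.
Proof.
  intros Hgc Hx' HV eps He.
  destruct (Hgc _ HV eps He) as [dg [Hdg Hg]].
  destruct (Psi_cont Y y0 (f x') t dg Hdg) as [dp [Hdp Hp]].
  destruct (f_cont x' Hx' dp Hdp) as [df [Hdf Hf]].
  exists (Rmin dp df). split. apply Rmin_pos; auto.
  intros x'' t'' H1 H2 HV2. pose proof (Rmin_l dp df). pose proof (Rmin_r dp df).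
  apply Hg; auto. apply Hp. apply Hf; lra. lra.
Qed.

Lemma box_star x : D x -> Estar x 0.
Proof.
  intro Hx.
  destruct (Hloc x Hx) as [U [HUo [HUD [HUx [HVo [Hinj [Hfc [g [Hg Hgc]]]]]]]]].
  assert (HVx : image f U (f x)) by (exists x; auto).
  destruct (HVo _ HVx) as [e1 [He1 HV]].
  destruct (Psi_cont Y y0 (f x) 0 e1 He1) as [dp [Hdp Hp]].
  rewrite Psi_0 in Hp.
  destruct (f_cont x Hx dp Hdp) as [df [Hdf Hf]].
  destruct (HUo x HUx) as [r [Hr Hb]].
  set (rho := Rmin df r).
  assert (Hrho : 0 < rho) by (apply Rmin_pos; auto).
  pose proof (Rmin_l df r). pose proof (Rmin_r df r).
  set (E := fun x' t => vnorm (vsub x' x) < rho /\ - dp < t < dp).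
  set (P := fun x' t => g (Psi y0 (f x') t)).
  assert (HEV : forall x' t, E x' t -> image f U (Psi y0 (f x') t)).
  { intros x' t [H1 H2]. apply HV. apply Hp. apply Hf. fold rho in H; lra.
    rewrite Rminus_0_r. apply Rabs_def1; lra. }
  assert (HEU : forall x' t, E x' t -> U x').
  { intros x' t [H1 H2]. apply Hb. fold rho in H0. lra. }
  apply (good_sub E P x 0); [|split; [apply vnorm_sub_self_lt; auto|lra]].
  split; [|split; [|split; [|split; [|split; [|split; [|split]]]]]].
  - intros x' t H'. apply HUD; eauto.
  - apply box_open.
  - intros x' t H'. apply HUD. apply Hg. auto.
  - intros x' t H' eps He.
    destruct (PB_cont (image f U) g x' t Hgc (HUD _ (HEU _ _ H')) (HEV _ _ H') eps He) as [d [Hd Hc]].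
    exists d. split; auto. intros x'' t'' H'' H1 H2. apply Hc; auto.
  - intros x' t [H1 H2]. split; auto; lra.
  - intros x' a b t [H1 H2] [H3 H4] Ht. split; auto; lra.
  - intros x' H'. unfold P. rewrite Psi_0. apply (chart_gf U); eauto.
  - intros x' t H'. unfold P. apply Hg. auto.
Qed.

Lemma open_interval_interval a b : interval (fun t => a < t < b).
Proof. intros u v t Hu Hv Ht. lra. Qed.

Lemma ext x tau sigma (U : X -> Prop) (g : Y -> X) eps :
  Estar x tau -> is_open U -> (forall u, U u -> D u) -> injective_on U f ->
  (forall v, image f U v -> U (g v) /\ f (g v) = v) -> continuous_on (image f U) g ->
  U (Pstar x tau) -> 0 < eps ->
  (forall y, vnorm (vsub y (f (Pstar x tau))) < eps -> image f U y) ->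
  (forall s, between tau sigma s -> vnorm (vsub (Psi y0 (f x) s) (f (Pstar x tau))) < eps / 2) ->
  Estar x sigma.
Proof.
  intros Htau HUo HUD Hinj Hg Hgc HUp He HV Hbt.
  pose proof good_star as GS.
  pose proof GS as [GD [GO [GPD [GC [G0 [GI [GP0 GCj]]]]]]].
  set (p := Pstar x tau) in *. set (yp := f p) in *.
  set (lo := Rmin tau sigma). set (hi := Rmax tau sigma).
  assert (Hlo : lo <= tau /\ lo <= sigma) by (unfold lo; split; [apply Rmin_l|apply Rmin_r]).
  assert (Hhi : tau <= hi /\ sigma <= hi) by (unfold hi; split; [apply Rmax_l|apply Rmax_r]).
  assert (Hbw : forall s, lo <= s <= hi -> between tau sigma s).
  { intros s Hs. unfold between, lo, hi in *. unfold Rmin, Rmax in *.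
    destruct (Rle_dec tau sigma); lra. }
  assert (Hx : D x) by (eapply GD; eauto).
  destruct (Psi_cont Y y0 (f x) lo (eps / 4) ltac:(lra)) as [da [Hda Hpa]].
  destruct (Psi_cont Y y0 (f x) hi (eps / 4) ltac:(lra)) as [db [Hdb Hpb]].
  set (eta := Rmin da db).
  assert (Heta : 0 < eta) by (apply Rmin_pos; auto).
  pose proof (Rmin_l da db) as Heta1. pose proof (Rmin_r da db) as Heta2. fold eta in Heta1, Heta2.
  assert (Hmid : forall s, lo - eta < s < hi + eta -> vnorm (vsub (Psi y0 (f x) s) yp) < 3 * eps / 4).
  { intros s Hs. destruct (Rlt_dec s lo).
    - assert (H1 : vnorm (vsub (Psi y0 (f x) s) (Psi y0 (f x) lo)) < eps / 4).
      { apply Hpa. apply vnorm_sub_self_lt; auto. apply Rabs_def1; lra. }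
      assert (H2 : vnorm (vsub (Psi y0 (f x) lo) yp) < eps / 2) by (apply Hbt, Hbw; lra).
      pose proof (vsub_tri _ (Psi y0 (f x) s) (Psi y0 (f x) lo) yp). lra.
    - destruct (Rlt_dec hi s).
      + assert (H1 : vnorm (vsub (Psi y0 (f x) s) (Psi y0 (f x) hi)) < eps / 4).
        { apply Hpb. apply vnorm_sub_self_lt; auto. apply Rabs_def1; lra. }
        assert (H2 : vnorm (vsub (Psi y0 (f x) hi) yp) < eps / 2) by (apply Hbt, Hbw; lra).
        pose proof (vsub_tri _ (Psi y0 (f x) s) (Psi y0 (f x) hi) yp). lra.
      + assert (vnorm (vsub (Psi y0 (f x) s) yp) < eps / 2) by (apply Hbt, Hbw; lra). lra. }
  set (kappa := exp (- (lo - eta))).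
  assert (Hk : 0 < kappa) by apply exp_pos.
  assert (Hunif : forall x' s, lo - eta < s -> vnorm (vsub (f x') (f x)) < eps / (4 * kappa) ->
     vnorm (vsub (Psi y0 (f x') s) (Psi y0 (f x) s)) < eps / 4).
  { intros x' s Hs Hf. rewrite Psi_diff_same, vnorm_scal.
    assert (exp (- s) < kappa) by (apply exp_increasing; lra).
    rewrite Rabs_right by (apply Rle_ge, Rlt_le, exp_pos).
    pose proof (vnorm_nonneg _ (vsub (f x') (f x))).
    apply Rle_lt_trans with (kappa * vnorm (vsub (f x') (f x))).
    apply Rmult_le_compat_r; lra.
    apply (Rmult_lt_compat_l kappa) in Hf; auto.
    replace (kappa * (eps / (4 * kappa))) with (eps / 4) in Hf by (field; lra). lra. }
  destruct (GO x tau Htau) as [ea [Hea Hoa]].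
  destruct (HUo p HUp) as [r [Hr Hbr]].
  destruct (GC x tau Htau r Hr) as [dbb [Hdbb Hcb]].
  destruct (f_cont x Hx (eps / (4 * kappa))) as [dc [Hdc Hfc]].
  { apply Rdiv_lt_0_compat; lra. }
  set (rho := Rmin ea (Rmin dbb dc)).
  assert (Hrho : 0 < rho) by (repeat apply Rmin_pos; auto).
  assert (Hr1 : rho <= ea) by apply Rmin_l.
  assert (Hr2 : rho <= dbb) by (eapply Rle_trans; [apply Rmin_r|apply Rmin_l]).
  assert (Hr3 : rho <= dc) by (eapply Rle_trans; [apply Rmin_r|apply Rmin_r]).
  assert (HW : forall x', vnorm (vsub x' x) < rho -> Estar x' tau /\ U (Pstar x' tau) /\ D x' /\
             vnorm (vsub (f x') (f x)) < eps / (4 * kappa)).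
  { intros x' Hx'. assert (Estar x' tau) by (apply Hoa; [lra|apply Rabs_self_lt; auto]).
    split; auto. split. apply Hbr. apply Hcb; auto. lra. apply Rabs_self_lt; auto.
    apply Hfc. lra. }
  set (Bx := fun x' t => vnorm (vsub x' x) < rho /\ lo - eta < t < hi + eta).
  assert (HBV : forall x' t, Bx x' t -> image f U (Psi y0 (f x') t)).
  { intros x' t [H1 H2]. apply HV. destruct (HW x' H1) as [_ [_ [_ H4]]].
    pose proof (Hunif x' t ltac:(lra) H4). pose proof (Hmid t H2).
    pose proof (vsub_tri _ (Psi y0 (f x') t) (Psi y0 (f x) t) yp). lra. }
  set (PB := fun x' t => g (Psi y0 (f x') t)).
  assert (Hover : forall x' t, Bx x' t -> Estar x' t -> Pstar x' t = PB x' t).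
  { intros x' t HB HE. destruct HB as [HB1 HB2]. destruct (HW x' HB1) as [W1 [W2 [W3 W4]]].
    apply (lift_uniq X Y D f Hloc (fun s => Estar x' s /\ lo - eta < s < hi + eta) (Pstar x') (PB x') tau t).
    - apply interval_inter; auto. apply open_interval_interval.
    - eapply ccont_sub; [|apply good_sec_cont; eauto]. simpl; tauto.
    - intros s [Hs1 Hs2] e' He'.
      destruct (PB_cont (image f U) g x' s Hgc W3 (HBV x' s (conj HB1 Hs2)) e' He') as [d [Hd Hc]].
      exists d; split; auto. intros t' [Ht1 Ht2] Htt. apply Hc; auto. apply vnorm_sub_self_lt; auto.
      apply HBV; split; auto.
    - intros s [Hs1 Hs2]. split; eauto. apply HUD. apply Hg. apply HBV; split; auto.
    - intros s [Hs1 Hs2]. unfold PB. rewrite GCj by auto. destruct (Hg _ (HBV x' s (conj HB1 Hs2))). auto.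
    - split; auto. lra.
    - unfold PB. rewrite <- (GCj x' tau W1). symmetry. apply (chart_gf U); auto.
    - split; auto. }
  set (E' := fun x' t => Estar x' t \/ Bx x' t).
  set (P' := fun x' t => if excluded_middle_informative (Bx x' t) then PB x' t else Pstar x' t).
  assert (HP1 : forall x' t, Estar x' t -> P' x' t = Pstar x' t).
  { intros x' t H'. unfold P'. destruct (excluded_middle_informative (Bx x' t)); auto. symmetry; auto. }
  assert (HP2 : forall x' t, Bx x' t -> P' x' t = PB x' t).
  { intros x' t H'. unfold P'. destruct (excluded_middle_informative (Bx x' t)); tauto. }
  apply (good_sub E' P' x sigma); [|right; split; [apply vnorm_sub_self_lt; auto|lra]].
  split; [|split; [|split; [|split; [|split; [|split; [|split]]]]]].
  - intros x' t [H'|H']; eauto. apply (HW x' (proj1 H')).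
  - intros x' t [H'|H'].
    + destruct (GO x' t H') as [e1 [He1 Hb1]]. exists e1; split; auto. intros; left; auto.
    + destruct (box_open x rho (lo - eta) (hi + eta) x' t H') as [e1 [He1 Hb1]].
      exists e1; split; auto. intros; right; apply Hb1; auto.
  - intros x' t [H'|H'].
    + rewrite HP1; eauto.
    + rewrite HP2 by auto. apply HUD, Hg, HBV; auto.
  - intros x' t H' e' He'. destruct (classic (Estar x' t)) as [HS|HS].
    + destruct (GO x' t HS) as [e1 [He1 Hb1]]. destruct (GC x' t HS e' He') as [e2 [He2 Hc2]].
      exists (Rmin e1 e2). split. apply Rmin_pos; auto.
      intros x'' t'' _ H1 H2. pose proof (Rmin_l e1 e2). pose proof (Rmin_r e1 e2).
      assert (Estar x'' t'') by (apply Hb1; lra).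
      rewrite !HP1 by auto. apply Hc2; auto; lra.
    + assert (HB : Bx x' t) by (destruct H'; tauto).
      destruct (box_open x rho (lo - eta) (hi + eta) x' t HB) as [e1 [He1 Hb1]].
      destruct (PB_cont (image f U) g x' t Hgc (proj1 (proj2 (proj2 (HW x' (proj1 HB))))) (HBV x' t HB) e' He') as [e2 [He2 Hc2]].
      exists (Rmin e1 e2). split. apply Rmin_pos; auto.
      intros x'' t'' _ H1 H2. pose proof (Rmin_l e1 e2). pose proof (Rmin_r e1 e2).
      assert (Bx x'' t'') by (apply Hb1; lra).
      rewrite !HP2 by auto. apply Hc2; try lra. apply HBV; auto.
  - intros x' t [H'|H']; left; eauto. apply G0 with tau. apply (HW x' (proj1 H')).
  - intros x'. destruct (Rlt_dec (vnorm (vsub x' x)) rho) as [Hl|Hl].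
    + apply (interval_union (Estar x') (Bx x') tau); auto.
      intros a b t [Ha1 Ha2] [Hb1 Hb2] Ht. split; auto. lra.
      apply (HW x' Hl). split; auto. lra.
    + intros a b t [Ha|Ha] [Hb|Hb] Ht; try (destruct Ha; tauto); try (destruct Hb; tauto).
      left. apply (GI x' a b); auto.
  - intros x' H0. assert (Estar x' 0).
    { destruct H0 as [H0|H0]; auto. apply G0 with tau. apply (HW x' (proj1 H0)). }
    rewrite HP1; auto.
  - intros x' t [H'|H'].
    + rewrite HP1; auto.
    + rewrite HP2 by auto. apply Hg, HBV; auto.
Qed.

Lemma star_eq_c x T (c : R -> X) : D x -> ccont (between 0 T) c ->
  (forall s, between 0 T s -> D (c s) /\ f (c s) = Psi y0 (f x) s) -> c 0 = x ->
  forall t, Estar x t -> between 0 T t -> Pstar x t = c t.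
Proof.
  intros Hx Hc Hcs Hc0 t Ht Hbt.
  pose proof good_star as GS. pose proof GS as [GD [GO [GPD [GC [G0 [GI [GP0 GCj]]]]]]].
  assert (H0 : Estar x 0) by (apply box_star; auto).
  apply (lift_uniq X Y D f Hloc (fun s => Estar x s /\ between 0 T s) (Pstar x) c 0 t).
  - apply interval_inter; auto. apply between_interval.
  - eapply ccont_sub; [|apply good_sec_cont; eauto]. simpl; tauto.
  - eapply ccont_sub; [|apply Hc]. simpl; tauto.
  - intros s [Hs1 Hs2]. split; eauto. apply Hcs; auto.
  - intros s [Hs1 Hs2]. rewrite GCj by auto. symmetry; apply Hcs; auto.
  - split; auto. unfold between; destruct (Rle_dec 0 T); [left|right]; lra.
  - rewrite GP0; auto.
  - split; auto.
Qed.

Lemma lift x T (c : R -> X) : D x -> ccont (between 0 T) c ->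
  (forall s, between 0 T s -> D (c s) /\ f (c s) = Psi y0 (f x) s) -> c 0 = x ->
  Estar x T /\ Pstar x T = c T.
Proof.
  intros Hx Hc Hcs Hc0.
  assert (Hfin : Estar x T -> Estar x T /\ Pstar x T = c T).
  { intro H; split; auto. apply (star_eq_c x T); auto. unfold between; destruct (Rle_dec 0 T); [left|right]; lra. }
  apply Hfin.
  assert (Hd : exists d, (d = 1 \/ d = -1) /\ 0 <= d * T).
  { destruct (Rle_dec 0 T). exists 1; split; auto; lra. exists (-1); split; auto; lra. }
  destruct Hd as [d [Hd HdT]].
  assert (Hdd : d * d = 1) by (destruct Hd; subst; lra).
  assert (Hbd : forall u, 0 <= u <= d * T -> between 0 T (d * u)).
  { intros u Hu. unfold between. destruct Hd; subst; lra. }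
  assert (Habs : forall a b, Rabs (d * a - d * b) = Rabs (a - b)).
  { intros a b. destruct Hd; subst. f_equal; ring. replace (-1 * a - -1 * b) with (- (a - b)) by ring. apply Rabs_Ropp. }
  set (A := fun u => 0 <= u <= d * T /\ Estar x (d * u)).
  assert (HA0 : A 0). { split. lra. rewrite Rmult_0_r. apply box_star; auto. }
  assert (Hb : bound A). { exists (d * T). intros u [Hu _]. lra. }
  destruct (completeness A Hb (ex_intro _ 0 HA0)) as [s [Hub Hlub]].
  assert (Hs0 : 0 <= s) by (apply Hub; auto).
  assert (Hs1 : s <= d * T). { apply Hlub. intros u [Hu _]. lra. }
  destruct (Hcs (d * s) (Hbd s ltac:(lra))) as [Hps Hfps].
  destruct (Hloc (c (d * s)) Hps) as [U [HUo [HUD [HUx [HVo [Hinj [Hfc [g [Hg Hgc]]]]]]]]].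
  assert (HVx : image f U (f (c (d * s)))) by (exists (c (d * s)); auto).
  destruct (HVo _ HVx) as [e0 [He0 HV]].
  destruct (HUo _ HUx) as [r [Hr Hbr]].
  destruct (Hc (d * s) (Hbd s ltac:(lra)) r Hr) as [dc [Hdc Hcc]].
  destruct (Psi_cont Y y0 (f x) (d * s) (e0 / 8) ltac:(lra)) as [dp [Hdp Hpp]].
  set (eta := Rmin dc dp).
  assert (Heta : 0 < eta) by (apply Rmin_pos; auto).
  pose proof (Rmin_l dc dp) as He1. pose proof (Rmin_r dc dp) as He2. fold eta in He1, He2.
  assert (Hu : exists u, A u /\ s - eta < u).
  { destruct (classic (exists u, A u /\ s - eta < u)) as [H|H]; auto.
    exfalso. assert (s <= s - eta); [|lra]. apply Hlub. intros u Hu.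
    destruct (Rle_dec u (s - eta)); auto. exfalso; apply H; exists u; split; auto; lra. }
  destruct Hu as [u [[Hu1 Hu2] Hu3]].
  assert (Hus : u <= s) by (apply Hub; split; auto).
  assert (Hpu : Pstar x (d * u) = c (d * u)) by (apply (star_eq_c x T); auto; apply Hbd; lra).
  assert (Hdus : Rabs (d * u - d * s) < eta) by (rewrite Habs; apply Rabs_def1; lra).
  assert (HcuU : U (c (d * u))).
  { apply Hbr. apply Hcc. apply Hbd; lra. lra. }
  assert (Hfcu : f (c (d * u)) = Psi y0 (f x) (d * u)) by (apply Hcs, Hbd; lra).
  assert (Hpsu : vnorm (vsub (Psi y0 (f x) (d * u)) (Psi y0 (f x) (d * s))) < e0 / 8).
  { apply Hpp. apply vnorm_sub_self_lt; auto. lra. }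
  set (sg := Rmin (d * T) (s + eta / 2)).
  assert (Hsg1 : sg <= d * T) by apply Rmin_l.
  assert (Hsg2 : sg <= s + eta / 2) by apply Rmin_r.
  assert (Hsg3 : sg = d * T \/ sg = s + eta / 2) by (unfold sg, Rmin; destruct (Rle_dec (d * T) (s + eta / 2)); auto).
  assert (Hsg4 : u <= sg) by (destruct Hsg3; lra).
  assert (HE : Estar x (d * sg)).
  { apply (ext x (d * u) (d * sg) U g (e0 / 2)); auto.
    - rewrite Hpu; auto.
    - lra.
    - intros y Hy. apply HV. rewrite Hpu, Hfcu in Hy. rewrite Hfps.
      pose proof (vsub_tri _ y (Psi y0 (f x) (d * u)) (Psi y0 (f x) (d * s))). lra.
    - intros s' Hs'. rewrite Hpu, Hfcu.
      assert (Hw : u <= d * s' <= sg).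
      { unfold between in Hs'. destruct Hd; subst; lra. }
      assert (Hs's : d * (d * s') = s') by (rewrite <- Rmult_assoc, Hdd; ring).
      assert (vnorm (vsub (Psi y0 (f x) s') (Psi y0 (f x) (d * s))) < e0 / 8).
      { apply Hpp. apply vnorm_sub_self_lt; auto. rewrite <- Hs's, Habs. apply Rabs_def1; lra. }
      pose proof (vsub_tri _ (Psi y0 (f x) s') (Psi y0 (f x) (d * s)) (Psi y0 (f x) (d * u))).
      rewrite (vsub_sym _ (Psi y0 (f x) (d * s))) in H0. lra. }
  assert (Hsgs : sg <= s) by (apply Hub; split; auto; destruct Hsg3; lra).
  destruct Hsg3 as [Hsg3|Hsg3]; [|lra].
  rewrite Hsg3, <- Rmult_assoc, Hdd, Rmult_1_l in HE. auto.
Qed.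

Lemma flow_good E P : is_flow_in D E P -> conjugates f y0 E P -> good E P.
Proof.
  intros [HD [HO [HPD [HC [HI [H0 H4]]]]]] Hcj.
  split; [|split; [|split; [|split; [|split; [|split; [|split]]]]]].
  - exact HD.
  - exact HO.
  - exact HPD.
  - exact HC.
  - intros x t H. apply HI. eauto.
  - intros x. intros a b t Ha Hb Ht. apply (proj2 (HI x (HD x a Ha)) a b); auto.
  - intros x Hx. apply H0. eauto.
  - exact Hcj.
Qed.

Lemma star_flow : is_flow_in D Estar Pstar.
Proof.
  pose proof good_star as GS. pose proof GS as [GD [GO [GPD [GC [G0 [GI [GP0 GCj]]]]]]].
  split; [|split; [|split; [|split; [|split; [|split]]]]]; auto.
  - intros x Hx. split. apply box_star; auto. apply GI.
  - intros x Hx. apply GP0, box_star; auto.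
  - intros x t1 t2 H1 H2.
    assert (Hx : D x) by eauto.
    assert (Hsec : forall s, between 0 t2 s -> Estar x (t1 + s)).
    { intros s Hs. destruct Hs.
      - apply (GI x t1 (t1 + t2)); auto; lra.
      - apply (GI x (t1 + t2) t1); auto; lra. }
    destruct (lift (Pstar x t1) t2 (fun s => Pstar x (t1 + s))) as [Ha Hb].
    + eauto.
    + intros s Hs eps He. destruct (GC x (t1 + s) (Hsec s Hs) eps He) as [d [Hd Hc]].
      exists d; split; auto. intros s' Hs' Hss. apply Hc; auto. apply vnorm_sub_self_lt; auto.
      replace (t1 + s' - (t1 + s)) with (s' - s) by ring. auto.
    + intros s Hs. split; eauto. rewrite GCj by auto. rewrite GCj by auto. rewrite Psi_comp. auto.
    + rewrite Rplus_0_r. auto.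
    + split; auto.
Qed.

End Flow.


Lemma vsub_sub_l {B : BanachSpace} (a b c : B) : vsub (vsub a b) (vsub a c) = vsub c b.
Proof.
  change (vsub (vadd a (vopp b)) (vadd a (vopp c)) = vsub c b).
  rewrite vsub_add_l, vsub_opp, <- vsub_swap. auto.
Qed.

Lemma vscal_sub2 {B : BanachSpace} (a b : R) (u v : B) :
  vsub (vscal a u) (vscal b v) = vadd (vscal a (vsub u v)) (vscal (a - b) v).
Proof.
  rewrite (vsub_chasles _ (vscal a u) (vscal a v) (vscal b v)), vscal_sub, vscal_sub_s. auto.
Qed.

Lemma vnorm_sub_pos {B : BanachSpace} (h : B) : h <> vzero -> 0 < vnorm h.
Proof.
  intro H. destruct (vnorm_nonneg _ h); auto. exfalso. apply H, vnorm_eq0. auto.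
Qed.

Lemma bl_ext {X Y : BanachSpace} (L1 L2 : X -> Y) : (forall h, L1 h = L2 h) -> bounded_linear L1 -> bounded_linear L2.
Proof.
  intros He [Ha [Hs [M [HM Hb]]]]. split; [|split].
  - intros; rewrite <- !He; auto.
  - intros; rewrite <- !He; auto.
  - exists M; split; auto. intros; rewrite <- He; auto.
Qed.

Lemma bl_scal {X : BanachSpace} (a : R) : bounded_linear (fun h : X => vscal a h).
Proof.
  split; [|split].
  - intros; apply vscal_distr_v.
  - intros. rewrite !vscal_assoc, Rmult_comm. auto.
  - exists (Rabs a). split. apply Rabs_pos. intros; rewrite vnorm_scal; lra.
Qed.

Lemma bl_id {X : BanachSpace} : bounded_linear (fun h : X => h).
Proof. split; [|split]; auto. exists 1. split. lra. intros; lra. Qed.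

Section Calc.
Variables X Y Z : BanachSpace.

Lemma frechet_unique (U : X -> Prop) (f : X -> Y) x L1 L2 : is_open U -> U x ->
  frechet_at U f x L1 -> frechet_at U f x L2 -> forall h, L1 h = L2 h.
Proof.
  intros HU Hx [HL1 H1] [HL2 H2] h.
  apply veq_small. intros eps He.
  set (n := vnorm h). assert (Hn : 0 <= n) by apply vnorm_nonneg.
  set (e1 := eps / (2 * (n + 1))). assert (He1 : 0 < e1) by (apply Rdiv_lt_0_compat; lra).
  destruct (H1 e1 He1) as [d1 [Hd1 Hf1]]. destruct (H2 e1 He1) as [d2 [Hd2 Hf2]].
  destruct (HU x Hx) as [r [Hr Hb]].
  set (m := Rmin d1 (Rmin d2 r)). assert (Hm : 0 < m) by (repeat apply Rmin_pos; auto).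
  assert (Hm1 : m <= d1) by apply Rmin_l.
  assert (Hm2 : m <= d2) by (eapply Rle_trans; [apply Rmin_r|apply Rmin_l]).
  assert (Hm3 : m <= r) by (eapply Rle_trans; [apply Rmin_r|apply Rmin_r]).
  set (tt := m / (2 * (n + 1))). assert (Htt : 0 < tt) by (apply Rdiv_lt_0_compat; lra).
  set (k := vscal tt h).
  assert (Hk : vnorm k = tt * n) by (unfold k; rewrite vnorm_scal, Rabs_right by lra; auto).
  assert (Hkm : tt * n < m).
  { apply Rle_lt_trans with (tt * (n + 1)). apply Rmult_le_compat_l; lra.
    replace (tt * (n + 1)) with (m / 2) by (unfold tt; field; lra). lra. }
  assert (HUk : U (vadd x k)). { apply Hb. rewrite vadd_comm, vadd_sub_cancel. lra. }
  specialize (Hf1 k ltac:(lra) HUk). specialize (Hf2 k ltac:(lra) HUk).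
  assert (Heq : vsub (L1 k) (L2 k) = vscal tt (vsub (L1 h) (L2 h))).
  { unfold k. rewrite (lin_scal HL1), (lin_scal HL2). rewrite vscal_sub. auto. }
  assert (Hid : vsub (L1 k) (L2 k) = vsub (vsub (vsub (f (vadd x k)) (f x)) (L2 k)) (vsub (vsub (f (vadd x k)) (f x)) (L1 k))).
  { rewrite vsub_sub_l. auto. }
  assert (Hb2 : vnorm (vsub (L1 k) (L2 k)) <= 2 * e1 * (tt * n)).
  { rewrite Hid. eapply Rle_trans. apply vnorm_sub_le. rewrite Hk in *. lra. }
  rewrite Heq, vnorm_scal, Rabs_right in Hb2 by lra.
  assert (vnorm (vsub (L1 h) (L2 h)) <= 2 * e1 * n).
  { apply (Rmult_le_reg_l tt); auto. lra. }
  assert (2 * e1 * n <= eps).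
  { unfold e1. replace (2 * (eps / (2 * (n + 1))) * n) with (eps * (n / (n + 1))) by (field; lra).
    assert (n / (n + 1) <= 1). { apply Rmult_le_reg_r with (n + 1). lra. field_simplify; lra. }
    nra. }
  lra.
Qed.

Lemma frechet_restrict (U V : X -> Prop) (f : X -> Y) x L : (forall u, V u -> U u) ->
  frechet_at U f x L -> frechet_at V f x L.
Proof.
  intros HVU [HL H]. split; auto. intros eps He. destruct (H eps He) as [d [Hd Hb]].
  exists d; split; auto.
Qed.

Lemma frechet_ext (U : X -> Prop) (f1 f2 : X -> Y) x L : (forall u, U u -> f1 u = f2 u) -> U x ->
  frechet_at U f1 x L -> frechet_at U f2 x L.
Proof.
  intros He Hx [HL H]. split; auto. intros eps Heps. destruct (H eps Heps) as [d [Hd Hb]].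
  exists d; split; auto. intros h Hh HU. rewrite <- !He; auto.
Qed.

Lemma frechet_id (U : X -> Prop) x : frechet_at U (fun u => u) x (fun h => h).
Proof.
  split. apply bl_id. intros eps He. exists 1. split. lra. intros h _ _.
  rewrite vadd_sub_cancel_l, vsub_self, vnorm0. pose proof (vnorm_nonneg _ h). nra.
Qed.

Lemma frechet_lip (U : X -> Prop) (f : X -> Y) x L : frechet_at U f x L ->
  exists K delta, 0 < K /\ 0 < delta /\ forall h, vnorm h < delta -> U (vadd x h) ->
    vnorm (vsub (f (vadd x h)) (f x)) <= K * vnorm h.
Proof.
  intros [HL H]. destruct (lin_bound HL) as [M [HM Hb]].
  destruct (H 1 Rlt_0_1) as [d [Hd Hf]]. exists (M + 1), d. split. lra. split; auto.
  intros h Hh HU. specialize (Hf h Hh HU).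
  pose proof (vnorm_sub_ge _ (vsub (f (vadd x h)) (f x)) (L h)). specialize (Hb h). lra.
Qed.

Lemma chain (U : X -> Prop) (V : Y -> Prop) (f : X -> Y) (g : Y -> Z) x L M :
  frechet_at U f x L -> frechet_at V g (f x) M -> (forall u, U u -> V (f u)) ->
  frechet_at U (fun u => g (f u)) x (fun h => M (L h)).
Proof.
  intros Hf Hg HUV. pose proof Hf as [HL Hf']. pose proof Hg as [HM Hg'].
  split. apply lin_comp; auto.
  intros eps He.
  destruct (lin_bound HL) as [ML [HML HbL]]. destruct (lin_bound HM) as [MM [HMM HbM]].
  set (e1 := eps / (2 * (ML + 1))). assert (He1 : 0 < e1) by (apply Rdiv_lt_0_compat; lra).
  set (e2 := Rmin 1 (eps / (2 * MM))). assert (He2 : 0 < e2) by (apply Rmin_pos; [lra|apply Rdiv_lt_0_compat; lra]).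
  assert (He21 : e2 <= 1) by apply Rmin_l. assert (He22 : e2 <= eps / (2 * MM)) by apply Rmin_r.
  destruct (Hg' e1 He1) as [dg [Hdg Hgb]].
  destruct (Hf' e2 He2) as [df [Hdf Hfb]].
  exists (Rmin df (dg / (ML + 1))). split. apply Rmin_pos; auto. apply Rdiv_lt_0_compat; lra.
  intros h Hh HUh. pose proof (Rmin_l df (dg / (ML + 1))). pose proof (Rmin_r df (dg / (ML + 1))).
  specialize (Hfb h ltac:(lra) HUh).
  set (k := vsub (f (vadd x h)) (f x)). fold k in Hfb.
  assert (Hkn : vnorm k <= (ML + 1) * vnorm h).
  { pose proof (vnorm_sub_ge _ k (L h)). specialize (HbL h). pose proof (vnorm_nonneg _ h). assert (e2 * vnorm h <= 1 * vnorm h) by (apply Rmult_le_compat_r; lra). lra. }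
  assert (Hkd : vnorm k < dg).
  { apply Rle_lt_trans with ((ML + 1) * vnorm h); auto.
    assert (Hh2 : vnorm h < dg / (ML + 1)) by lra. apply (Rmult_lt_compat_l (ML + 1)) in Hh2; [|lra].
    replace ((ML + 1) * (dg / (ML + 1))) with dg in Hh2 by (field; lra). lra. }
  assert (Hfk : vadd (f x) k = f (vadd x h)) by (unfold k; apply vadd_sub_r).
  specialize (Hgb k Hkd). rewrite Hfk in Hgb. specialize (Hgb (HUV _ HUh)).
  rewrite (vsub_chasles _ _ (M k)). eapply Rle_trans. apply vnorm_triangle.
  rewrite <- (lin_sub HM). 
  assert (vnorm (M (vsub k (L h))) <= MM * (e2 * vnorm h)).
  { eapply Rle_trans. apply HbM. apply Rmult_le_compat_l; lra. }
  assert (e1 * vnorm k <= eps / 2 * vnorm h).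
  { apply Rle_trans with (e1 * ((ML + 1) * vnorm h)). apply Rmult_le_compat_l; lra.
    unfold e1. right. field. lra. }
  assert (MM * (e2 * vnorm h) <= eps / 2 * vnorm h).
  { pose proof (vnorm_nonneg _ h). rewrite <- Rmult_assoc. apply Rmult_le_compat_r; auto.
    apply Rle_trans with (MM * (eps / (2 * MM))). apply Rmult_le_compat_l; lra. right; field; lra. }
  lra.
Qed.
End Calc.


Lemma vsub_sub_swap {B : BanachSpace} (P Q R S : B) : vsub (vsub P Q) (vsub R S) = vsub (vsub P R) (vsub Q S).
Proof.
  change (vsub (vadd P (vopp Q)) (vadd R (vopp S)) = vsub (vsub P R) (vsub Q S)).
  rewrite vsub_add_add, vsub_opp. unfold vsub at 1. auto.
Qed.

Lemma vsub_add_r {B : BanachSpace} (x y z : B) : vsub x (vadd y z) = vsub (vsub x y) z.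
Proof. unfold vsub. rewrite vopp_add, vadd_assoc. auto. Qed.

Lemma le_eps_le a b : (forall e, 0 < e -> a <= b + e) -> a <= b.
Proof.
  intro H. destruct (Rle_dec a b) as [|Hn]; auto. apply Rnot_le_lt in Hn.
  specialize (H ((a - b) / 2) ltac:(lra)). lra.
Qed.

Section Curves.
Variables X Y : BanachSpace.

Lemma curve_cont (J : R -> Prop) (c : R -> X) t v : curve_deriv_at J c t v ->
  forall eps, 0 < eps -> exists delta, 0 < delta /\ forall s, Rabs s < delta -> J (t + s) ->
    vnorm (vsub (c (t + s)) (c t)) < eps.
Proof.
  intros H eps He. destruct (H 1 Rlt_0_1) as [d [Hd Hb]].
  pose proof (vnorm_nonneg _ v).
  exists (Rmin d (eps / (vnorm v + 2))). split. apply Rmin_pos; auto. apply Rdiv_lt_0_compat; lra.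
  intros s Hs HJ. pose proof (Rmin_l d (eps / (vnorm v + 2))). pose proof (Rmin_r d (eps / (vnorm v + 2))).
  specialize (Hb s ltac:(lra) HJ).
  pose proof (vnorm_sub_ge _ (vsub (c (t + s)) (c t)) (vscal s v)). rewrite vnorm_scal in H3.
  assert (Rabs s * (vnorm v + 2) < eps).
  { assert (Rabs s < eps / (vnorm v + 2)) by lra. apply (Rmult_lt_compat_r (vnorm v + 2)) in H4; [|lra].
    replace (eps / (vnorm v + 2) * (vnorm v + 2)) with eps in H4 by (field; lra). lra. }
  pose proof (Rabs_pos s). nra.
Qed.

Lemma curve_ccont (J : R -> Prop) (c : R -> X) (v : R -> X) :
  (forall t, J t -> curve_deriv_at J c t (v t)) -> ccont J c.
Proof.
  intros H t Ht eps He. destruct (curve_cont J c t (v t) (H t Ht) eps He) as [d [Hd Hb]].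
  exists d; split; auto. intros t' Ht' Htt. specialize (Hb (t' - t) Htt).
  replace (t + (t' - t)) with t' in Hb by ring. auto.
Qed.

Lemma curve_chain (J : R -> Prop) (U : X -> Prop) (c : R -> X) (f : X -> Y) t v L :
  curve_deriv_at J c t v -> frechet_at U f (c t) L -> (forall s, J s -> U (c s)) ->
  curve_deriv_at J (fun s => f (c s)) t (L v).
Proof.
  intros Hc [HL Hf] HU eps He.
  destruct (lin_bound HL) as [ML [HML HbL]].
  pose proof (vnorm_nonneg _ v) as Hv.
  set (e1 := eps / (2 * (vnorm v + 1))). assert (He1 : 0 < e1) by (apply Rdiv_lt_0_compat; lra).
  set (e2 := Rmin 1 (eps / (2 * ML))). assert (He2 : 0 < e2) by (apply Rmin_pos; [lra|apply Rdiv_lt_0_compat; lra]).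
  assert (He21 : e2 <= 1) by apply Rmin_l. assert (He22 : e2 <= eps / (2 * ML)) by apply Rmin_r.
  destruct (Hf e1 He1) as [dg [Hdg Hgb]].
  destruct (Hc e2 He2) as [df [Hdf Hfb]].
  exists (Rmin df (dg / (vnorm v + 1))). split. apply Rmin_pos; auto. apply Rdiv_lt_0_compat; lra.
  intros s Hs HJs. pose proof (Rmin_l df (dg / (vnorm v + 1))). pose proof (Rmin_r df (dg / (vnorm v + 1))).
  specialize (Hfb s ltac:(lra) HJs).
  set (k := vsub (c (t + s)) (c t)). fold k in Hfb.
  pose proof (Rabs_pos s).
  assert (Hkn : vnorm k <= (vnorm v + 1) * Rabs s).
  { pose proof (vnorm_sub_ge _ k (vscal s v)). rewrite vnorm_scal in H2.
    assert (e2 * Rabs s <= 1 * Rabs s) by (apply Rmult_le_compat_r; lra). nra. }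
  assert (Hkd : vnorm k < dg).
  { apply Rle_lt_trans with ((vnorm v + 1) * Rabs s); auto.
    assert (Hs2 : Rabs s < dg / (vnorm v + 1)) by lra.
    apply (Rmult_lt_compat_l (vnorm v + 1)) in Hs2; [|lra].
    replace ((vnorm v + 1) * (dg / (vnorm v + 1))) with dg in Hs2 by (field; lra). lra. }
  assert (Hfk : vadd (c t) k = c (t + s)) by (unfold k; apply vadd_sub_r).
  specialize (Hgb k Hkd). rewrite Hfk in Hgb. specialize (Hgb (HU _ HJs)).
  rewrite <- (lin_scal HL).
  rewrite (vsub_chasles _ _ (L k)). eapply Rle_trans. apply vnorm_triangle.
  rewrite <- (lin_sub HL).
  assert (vnorm (L (vsub k (vscal s v))) <= ML * (e2 * Rabs s)).
  { eapply Rle_trans. apply HbL. apply Rmult_le_compat_l; lra. }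
  assert (e1 * vnorm k <= eps / 2 * Rabs s).
  { apply Rle_trans with (e1 * ((vnorm v + 1) * Rabs s)). apply Rmult_le_compat_l; lra.
    unfold e1. right. field. lra. }
  assert (ML * (e2 * Rabs s) <= eps / 2 * Rabs s).
  { rewrite <- Rmult_assoc. apply Rmult_le_compat_r; auto.
    apply Rle_trans with (ML * (eps / (2 * ML))). apply Rmult_le_compat_l; lra. right; field; lra. }
  fold k. lra.
Qed.

Lemma curve_sub (J : R -> Prop) (u1 u2 : R -> Y) t a b :
  curve_deriv_at J u1 t a -> curve_deriv_at J u2 t b ->
  curve_deriv_at J (fun s => vsub (u1 s) (u2 s)) t (vsub a b).
Proof.
  intros H1 H2 eps He. destruct (H1 (eps / 2) ltac:(lra)) as [d1 [Hd1 Hb1]].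
  destruct (H2 (eps / 2) ltac:(lra)) as [d2 [Hd2 Hb2]].
  exists (Rmin d1 d2). split. apply Rmin_pos; auto.
  intros s Hs HJ. pose proof (Rmin_l d1 d2). pose proof (Rmin_r d1 d2).
  specialize (Hb1 s ltac:(lra) HJ). specialize (Hb2 s ltac:(lra) HJ).
  rewrite vsub_sub_swap, vscal_sub, vsub_sub_swap.
  eapply Rle_trans. apply vnorm_sub_le. lra.
Qed.

Lemma curve_Psi (J : R -> Prop) (y0 y : Y) t :
  curve_deriv_at J (Psi y0 y) t (vopp (vsub (Psi y0 y t) y0)).
Proof.
  intros eps He.
  set (w := vsub y y0). pose proof (vnorm_nonneg _ w).
  destruct (expm_deriv t (eps / (vnorm w + 1))) as [d [Hd Hb]]. apply Rdiv_lt_0_compat; lra.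
  exists d; split; auto. intros s Hs _.
  rewrite Psi_diff, vsub_self, vscal_v0, v0l, Psi_sub. fold w.
  rewrite <- vscal_oppr, vscal_assoc, <- vscal_sub_s, vnorm_scal.
  specialize (Hb s Hs).
  replace (exp (- (t + s)) - exp (- t) - s * - exp (- t)) with (exp (- (t + s)) - exp (- t) + s * exp (- t)) by ring.
  apply Rle_trans with (eps / (vnorm w + 1) * Rabs s * vnorm w). apply Rmult_le_compat_r; auto.
  pose proof (Rabs_pos s).
  apply Rle_trans with (eps / (vnorm w + 1) * Rabs s * (vnorm w + 1)).
  apply Rmult_le_compat_l. apply Rmult_le_pos; auto. apply Rlt_le, Rdiv_lt_0_compat; lra. lra.
  right. field. lra.
Qed.

Lemma curve_exp_scal (J : R -> Prop) (w : R -> Y) t a :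
  curve_deriv_at J w t a ->
  curve_deriv_at J (fun s => vscal (exp s) (w s)) t (vadd (vscal (exp t) (w t)) (vscal (exp t) a)).
Proof.
  intros Hw eps He.
  pose proof (vnorm_nonneg _ (w t)) as Hw0. pose proof (vnorm_nonneg _ a) as Ha0.
  set (K := exp t + 1).
  assert (HK : 0 < K) by (unfold K; pose proof (exp_pos t); lra).
  destruct (Hw (eps / (3 * (K + 1)))) as [d1 [Hd1 Hb1]]. apply Rdiv_lt_0_compat; lra.
  destruct (exp_deriv t (eps / (3 * (vnorm (w t) + 1)))) as [d2 [Hd2 Hb2]]. apply Rdiv_lt_0_compat; lra.
  destruct (exp_cont t (Rmin 1 (eps / (3 * (vnorm a + 1))))) as [d3 [Hd3 Hb3]].
  apply Rmin_pos. lra. apply Rdiv_lt_0_compat; lra.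
  exists (Rmin d1 (Rmin d2 d3)). split. repeat apply Rmin_pos; auto.
  intros s Hs HJ.
  assert (Hs1 : Rabs s < d1) by (eapply Rlt_le_trans; [apply Hs|apply Rmin_l]).
  assert (Hs2 : Rabs s < d2) by (eapply Rlt_le_trans; [apply Hs|eapply Rle_trans; [apply Rmin_r|apply Rmin_l]]).
  assert (Hs3 : Rabs s < d3) by (eapply Rlt_le_trans; [apply Hs|eapply Rle_trans; [apply Rmin_r|apply Rmin_r]]).
  specialize (Hb1 s Hs1 HJ). specialize (Hb2 s Hs2).
  specialize (Hb3 (t + s)). replace (t + s - t) with s in Hb3 by ring. specialize (Hb3 Hs3).
  assert (Hb31 : Rabs (exp (t + s) - exp t) < 1) by (eapply Rlt_le_trans; [apply Hb3|apply Rmin_l]).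
  assert (Hb32 : Rabs (exp (t + s) - exp t) < eps / (3 * (vnorm a + 1))) by (eapply Rlt_le_trans; [apply Hb3|apply Rmin_r]).
  set (E' := exp (t + s)). set (E := exp t). fold E' E in Hb2, Hb31, Hb32. fold E in K.
  set (w' := w (t + s)). set (w0 := w t). fold w' w0 in Hb1, Hw0.
  assert (HE' : 0 < E' < K + 1).
  { split. apply exp_pos. apply Rabs_def2 in Hb31. unfold K. lra. }
  rewrite <- vsub_add_r.
  rewrite (vsub_chasles _ (vscal E' w') (vscal E' (vadd w0 (vscal s a))) _).
  eapply Rle_trans. apply vnorm_triangle.
  assert (Hp1 : vnorm (vsub (vscal E' w') (vscal E' (vadd w0 (vscal s a)))) <= (K + 1) * (eps / (3 * (K + 1)) * Rabs s)).
  { rewrite <- vscal_sub, vnorm_scal, vsub_add_r, Rabs_right by lra.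
    apply Rle_trans with (E' * (eps / (3 * (K + 1)) * Rabs s)). apply Rmult_le_compat_l; lra.
    apply Rmult_le_compat_r. apply Rmult_le_pos. apply Rlt_le, Rdiv_lt_0_compat; lra. apply Rabs_pos. lra. }
  assert (Hid : vsub (vscal E' (vadd w0 (vscal s a))) (vadd (vscal E w0) (vscal s (vadd (vscal E w0) (vscal E a))))
     = vadd (vscal (E' - E - s * E) w0) (vscal (s * (E' - E)) a)).
  { rewrite !vscal_distr_v, !vscal_assoc, vadd_assoc, <- vscal_distr_s, vsub_add_add, <- !vscal_sub_s.
    f_equal; f_equal; ring. }
  rewrite Hid. pose proof (vnorm_triangle _ (vscal (E' - E - s * E) w0) (vscal (s * (E' - E)) a)) as Htri. rewrite !vnorm_scal in Htri.
  assert (Hq1 : Rabs (E' - E - s * E) * vnorm w0 <= eps / 3 * Rabs s).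
  { apply Rle_trans with (eps / (3 * (vnorm w0 + 1)) * Rabs s * vnorm w0). apply Rmult_le_compat_r; auto.
    apply Rle_trans with (eps / (3 * (vnorm w0 + 1)) * Rabs s * (vnorm w0 + 1)).
    apply Rmult_le_compat_l. apply Rmult_le_pos. apply Rlt_le, Rdiv_lt_0_compat; lra. apply Rabs_pos. lra.
    right; field; lra. }
  assert (Hq2 : Rabs (s * (E' - E)) * vnorm a <= eps / 3 * Rabs s).
  { rewrite Rabs_mult. rewrite Rmult_assoc. rewrite (Rmult_comm (eps / 3)). apply Rmult_le_compat_l. apply Rabs_pos.
    apply Rle_trans with (eps / (3 * (vnorm a + 1)) * vnorm a). apply Rmult_le_compat_r; lra.
    apply Rle_trans with (eps / (3 * (vnorm a + 1)) * (vnorm a + 1)).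
    apply Rmult_le_compat_l. apply Rlt_le, Rdiv_lt_0_compat; lra. lra. right; field; lra. }
  assert ((K + 1) * (eps / (3 * (K + 1)) * Rabs s) = eps / 3 * Rabs s) by (field; lra).
  lra.
Qed.
End Curves.

Section Zero.
Variable Y : BanachSpace.

Lemma curve_zero_fwd (J : R -> Prop) (z : R -> Y) a b : interval J ->
  (forall t, J t -> curve_deriv_at J z t vzero) -> J a -> J b -> a <= b -> z b = z a.
Proof.
  intros HI Hd Ha Hb Hab. apply veq_small. intros eps He.
  set (e := eps / (b - a + 1)). assert (He' : 0 < e) by (apply Rdiv_lt_0_compat; lra).
  set (A := fun u => a <= u <= b /\ vnorm (vsub (z u) (z a)) <= e * (u - a)).
  assert (HA0 : A a). { split. lra. rewrite vsub_self, vnorm0. lra. }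
  assert (Hbd : bound A). { exists b. intros u [Hu _]. lra. }
  destruct (completeness A Hbd (ex_intro _ a HA0)) as [s [Hub Hlub]].
  assert (Hs0 : a <= s) by (apply Hub; auto).
  assert (Hs1 : s <= b). { apply Hlub. intros u [Hu _]. lra. }
  assert (HJ : forall u, a <= u <= b -> J u) by (intros; apply (HI a b); auto).
  assert (Hz0 : forall u s', vsub (vsub (z u) (z s')) (vscal (u - s') vzero) = vsub (z u) (z s')).
  { intros. rewrite vscal_v0, vsub_0. auto. }
  assert (HAs : A s).
  { split. lra. apply le_eps_le. intros eta Heta.
    destruct (curve_cont Y J z s vzero (Hd s (HJ s ltac:(lra))) eta Heta) as [d [Hdd Hc]].
    assert (Hu : exists u, A u /\ s - d < u).
    { destruct (classic (exists u, A u /\ s - d < u)) as [H|H]; auto.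
      exfalso. assert (s <= s - d); [|lra]. apply Hlub. intros u Hu.
      destruct (Rle_dec u (s - d)); auto. exfalso; apply H; exists u; split; auto; lra. }
    destruct Hu as [u [[Hu1 Hu2] Hu3]]. assert (u <= s) by (apply Hub; split; auto).
    specialize (Hc (u - s)). replace (s + (u - s)) with u in Hc by ring.
    assert (Hc' : vnorm (vsub (z u) (z s)) < eta) by (apply Hc; [apply Rabs_def1; lra|apply HJ; lra]).
    pose proof (vsub_tri _ (z s) (z u) (z a)). rewrite vsub_sym in Hc'.
    assert (e * (u - a) <= e * (s - a)) by (apply Rmult_le_compat_l; lra). lra. }
  destruct (Req_dec s b) as [<-|Hsb].
  - destruct HAs as [_ H]. eapply Rle_trans. apply H.
    apply Rle_trans with (e * (s - a + 1)). apply Rmult_le_compat_l; lra.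
    right. unfold e. field. lra.
  - exfalso. destruct (Hd s (HJ s ltac:(lra)) e He') as [d [Hdd Hc]].
    set (u := Rmin b (s + d / 2)).
    assert (Hu1 : u <= b) by apply Rmin_l. assert (Hu2 : u <= s + d / 2) by apply Rmin_r.
    assert (Hu3 : s < u) by (unfold u; apply Rmin_glb_lt; lra).
    specialize (Hc (u - s)). replace (s + (u - s)) with u in Hc by ring.
    rewrite Hz0 in Hc. rewrite Rabs_right in Hc by lra.
    specialize (Hc ltac:(lra) (HJ u ltac:(lra))).
    assert (A u).
    { split. lra. destruct HAs as [_ H]. pose proof (vsub_tri _ (z u) (z s) (z a)).
      assert (e * (u - s) + e * (s - a) = e * (u - a)) by ring. lra. }
    specialize (Hub u H). lra.
Qed.

Lemma curve_zero_refl (J : R -> Prop) (z : R -> Y) t : curve_deriv_at J z t vzero ->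
  curve_deriv_at (fun u => J (- u)) (fun u => z (- u)) (- t) vzero.
Proof.
  intros H eps He. destruct (H eps He) as [d [Hd Hb]]. exists d; split; auto.
  intros s Hs HJ. specialize (Hb (- s)). rewrite Rabs_Ropp in Hb.
  replace (- (- t + s)) with (t + - s) in * by ring. rewrite Ropp_involutive.
  rewrite !vscal_v0, !vsub_0 in *. apply Hb; auto.
Qed.

Lemma curve_zero_const (J : R -> Prop) (z : R -> Y) a b : interval J ->
  (forall t, J t -> curve_deriv_at J z t vzero) -> J a -> J b -> z a = z b.
Proof.
  intros HI Hd Ha Hb. destruct (Rle_dec a b) as [H|H].
  - symmetry. apply (curve_zero_fwd J z a b); auto.
  - apply Rnot_le_lt in H.
    assert (Hr : (fun u => z (- u)) (- b) = (fun u => z (- u)) (- a)).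
    { apply (curve_zero_fwd (fun u => J (- u)) (fun u => z (- u)) (- a) (- b)).
      - intros p q r Hp Hq Hr. apply (HI (- q) (- p)); auto. lra.
      - intros t Ht. replace t with (- - t) by ring. apply curve_zero_refl. apply Hd; auto.
      - rewrite Ropp_involutive; auto.
      - rewrite Ropp_involutive; auto.
      - lra. }
    simpl in Hr. rewrite !Ropp_involutive in Hr. auto.
Qed.

End Zero.


Section C1.
Variables X Y : BanachSpace.
Variable D : X -> Prop.
Variable f : X -> Y.
Variable y0 : Y.
Hypothesis HDo : is_open D.
Hypothesis Hloc : local_homeomorphism D f.
Hypothesis HC1 : local_C1_diffeomorphism D f.
Variable Df : X -> X -> Y.
Hypothesis HDf : frechet_derivative_on D f Df.
Variable F : X -> X.
Hypothesis HF : forall x, D x -> Df x (F x) = vopp (vsub (f x) y0).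

Local Notation ES := (Estar X Y D f y0).
Local Notation PS := (Pstar X Y D f y0).

Lemma Df_cont x : D x -> forall eps, 0 < eps -> exists delta, 0 < delta /\
  forall x', D x' -> vnorm (vsub x' x) < delta -> forall h, vnorm (vsub (Df x' h) (Df x h)) <= eps * vnorm h.
Proof.
  intros Hx eps He. destruct HC1 as [[Df' [HDf' Hc]] _].
  destruct (Hc x Hx eps He) as [d [Hd Hb]]. exists d; split; auto.
  intros x' Hx' Hxx h.
  rewrite (frechet_unique X Y D f x' (Df x') (Df' x') HDo Hx' (HDf x' Hx') (HDf' x' Hx')).
  rewrite (frechet_unique X Y D f x (Df x) (Df' x) HDo Hx (HDf x Hx) (HDf' x Hx)).
  apply Hb; auto.
Qed.

Definition chart1 (p : X) (U : X -> Prop) (g : Y -> X) (Dg : Y -> Y -> X) :=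
  is_open U /\ (forall u, U u -> D u) /\ U p /\ is_open (image f U) /\ injective_on U f /\
  (forall v, image f U v -> U (g v) /\ f (g v) = v) /\
  frechet_derivative_on (image f U) g Dg /\
  (forall y, image f U y -> forall eps, 0 < eps -> exists delta, 0 < delta /\
      forall y', image f U y' -> vnorm (vsub y' y) < delta ->
        forall h, vnorm (vsub (Dg y' h) (Dg y h)) <= eps * vnorm h) /\
  (forall q, U q -> (forall h, Dg (f q) (Df q h) = h) /\ (forall w, Df q (Dg (f q) w) = w)).

Lemma chart1_ex p : D p -> exists U g Dg, chart1 p U g Dg.
Proof.
  intro Hp. destruct HC1 as [_ Hch].
  destruct (Hch p Hp) as [U [HUo [HUD [HUp [HVo [Hinj [Hfc [g [Hg [Dg [HDg HDgc]]]]]]]]]]].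
  exists U, g, Dg. split; [|split; [|split; [|split; [|split; [|split; [|split; [|split]]]]]]]; auto.
  intros q Hq. assert (HVq : image f U (f q)) by (exists q; auto).
  assert (Hgq : g (f q) = q) by (apply (chart_gf X Y f U); auto).
  split.
  - assert (Hch1 : frechet_at U (fun u => g (f u)) q (fun h => Dg (f q) (Df q h))).
    { apply (chain X Y X U (image f U) f g q (Df q) (Dg (f q))).
      - apply (frechet_restrict X Y D); auto.
      - apply HDg; auto.
      - intros u Hu; exists u; auto. }
    assert (Hch2 : frechet_at U (fun u => u) q (fun h => Dg (f q) (Df q h))).
    { apply (frechet_ext X X U (fun u => g (f u))); auto. intros u Hu. apply (chart_gf X Y f U); auto. }
    intro h. exact (frechet_unique X X U (fun u => u) q (fun h => Dg (f q) (Df q h)) (fun h => h) HUo Hq Hch2 (frechet_id X U q) h).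
  - assert (Hch1 : frechet_at (image f U) (fun v => f (g v)) (f q) (fun w => Df q (Dg (f q) w))).
    { pose proof (chain Y X Y (image f U) D g f (f q) (Dg (f q)) (Df (g (f q)))) as Hc.
      rewrite Hgq in Hc. apply Hc.
      - apply HDg; auto.
      - apply HDf; apply HUD; auto.
      - intros v Hv. apply HUD. apply Hg; auto. }
    assert (Hch2 : frechet_at (image f U) (fun v => v) (f q) (fun w => Df q (Dg (f q) w))).
    { apply (frechet_ext Y Y (image f U) (fun v => f (g v))); auto. intros v Hv. apply Hg; auto. }
    intro w. exact (frechet_unique Y Y (image f U) (fun v => v) (f q) (fun w => Df q (Dg (f q) w)) (fun w => w) HVo HVq Hch2 (frechet_id Y (image f U) (f q)) w).
Qed.

Definition Finv (q : X) (w : Y) : X := epsilon (inhabits vzero) (fun h => Df q h = w).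

Lemma Finv_chart p U g Dg q w : chart1 p U g Dg -> U q -> Finv q w = Dg (f q) w.
Proof.
  intros Hc Hq. destruct Hc as [_ [_ [_ [_ [_ [_ [_ [_ HK]]]]]]]]. destruct (HK q Hq) as [K1 K2].
  unfold Finv. set (h0 := epsilon (inhabits vzero) (fun h => Df q h = w)).
  assert (Hh : Df q h0 = w) by (apply epsilon_spec; exists (Dg (f q) w); apply K2).
  rewrite <- Hh, K1. reflexivity.
Qed.

Lemma F_eq p U g Dg q : chart1 p U g Dg -> U q -> F q = Dg (f q) (vopp (vsub (f q) y0)).
Proof.
  intros Hc Hq. pose proof Hc as [_ [HUD [_ [_ [_ [_ [_ [_ HK]]]]]]]]. destruct (HK q Hq) as [K1 K2].
  rewrite <- HF by auto. rewrite K1. auto.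
Qed.

Definition Aop x t h := Finv (PS x t) (vscal (exp (- t)) (Df x h)).
Definition Bop x t := F (PS x t).

Lemma local_rep x t U g Dg : ES x t -> chart1 (PS x t) U g Dg -> exists rho, 0 < rho /\
  forall x' t', ES x' t' -> vnorm (vsub x' x) < rho -> Rabs (t' - t) < rho ->
    U (PS x' t') /\ PS x' t' = g (Psi y0 (f x') t') /\ image f U (Psi y0 (f x') t') /\
    f (PS x' t') = Psi y0 (f x') t'.
Proof.
  intros Hxt Hc. pose proof (good_star X Y D f y0 Hloc) as [GD [GO [GPD [GC [G0 [GI [GP0 GCj]]]]]]].
  destruct Hc as [HUo [HUD [HUp [HVo [Hinj [Hg _]]]]]].
  destruct (HUo _ HUp) as [r [Hr Hb]].
  destruct (GC x t Hxt r Hr) as [d [Hd Hcc]].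
  exists d. split; auto. intros x' t' H' H1 H2.
  assert (HU : U (PS x' t')) by (apply Hb; apply Hcc; auto).
  assert (Hf : f (PS x' t') = Psi y0 (f x') t') by (apply GCj; auto).
  split; auto. split. rewrite <- Hf. symmetry. apply (chart_gf X Y f U); auto.
  split; auto. exists (PS x' t'); auto.
Qed.

Lemma Rmin5 a b c d e : 0 < a -> 0 < b -> 0 < c -> 0 < d -> 0 < e ->
  exists m, 0 < m /\ m <= a /\ m <= b /\ m <= c /\ m <= d /\ m <= e.
Proof.
  intros. exists (Rmin a (Rmin b (Rmin c (Rmin d e)))). split. repeat apply Rmin_pos; auto.
  repeat split.
  apply Rmin_l.
  eapply Rle_trans; [apply Rmin_r|apply Rmin_l].
  eapply Rle_trans; [apply Rmin_r|]. eapply Rle_trans; [apply Rmin_r|apply Rmin_l].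
  eapply Rle_trans; [apply Rmin_r|]. eapply Rle_trans; [apply Rmin_r|]. eapply Rle_trans; [apply Rmin_r|apply Rmin_l].
  eapply Rle_trans; [apply Rmin_r|]. eapply Rle_trans; [apply Rmin_r|]. eapply Rle_trans; [apply Rmin_r|apply Rmin_r].
Qed.

Lemma pos_min1 a : 0 < a -> 0 < Rmin 1 a /\ Rmin 1 a <= 1 /\ Rmin 1 a <= a.
Proof. intro. split. apply Rmin_pos; lra. split. apply Rmin_l. apply Rmin_r. Qed.

Lemma est_frechet x t : ES x t -> forall eps, 0 < eps -> exists delta, 0 < delta /\
  forall h s, vnorm h < delta -> Rabs s < delta -> ES (vadd x h) (t + s) ->
    vnorm (vsub (vsub (PS (vadd x h) (t + s)) (PS x t)) (vadd (Aop x t h) (vscal s (Bop x t))))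
      <= eps * Rmax (vnorm h) (Rabs s).
Proof.
  intros Hxt eps He.
  pose proof (good_star X Y D f y0 Hloc) as [GD [GO [GPD [GC [G0 [GI [GP0 GCj]]]]]]].
  assert (Hx : D x) by eauto. assert (Hp : D (PS x t)) by eauto.
  destruct (chart1_ex (PS x t) Hp) as [U [g [Dg Hc]]].
  destruct (local_rep x t U g Dg Hxt Hc) as [rho [Hrho Hrep]].
  pose proof Hc as [HUo [HUD [HUp [HVo [Hinj [Hg [HDg [HDgc HK]]]]]]]].
  set (p := PS x t) in *. set (y := Psi y0 (f x) t).
  assert (Hfp : f p = y) by (apply GCj; auto).
  assert (HVy : image f U y) by (exists p; auto).
  assert (Hgy : g y = p) by (rewrite <- Hfp; apply (chart_gf X Y f U); auto).
  assert (HA : forall h, Aop x t h = Dg y (vscal (exp (- t)) (Df x h))).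
  { intro h. unfold Aop. fold p. rewrite (Finv_chart p U g Dg p); auto. rewrite Hfp; auto. }
  assert (HB : Bop x t = Dg y (vopp (vsub y y0))).
  { unfold Bop. fold p. rewrite (F_eq p U g Dg p); auto. rewrite Hfp; auto. }
  pose proof (HDg y HVy) as [HM Hgf].
  pose proof (HDf x Hx) as [HL Hff].
  destruct (lin_bound HM) as [MM [HMM HbM]].
  destruct (lin_bound HL) as [ML [HML HbL]].
  set (e := exp (- t)). assert (He0 : 0 < e) by apply exp_pos.
  set (w := vsub (f x) y0). set (nw := vnorm w). assert (Hnw : 0 <= nw) by apply vnorm_nonneg.
  set (C := (e + 1) * (1 + ML + nw)). assert (HC : 0 < C) by (unfold C; nra).
  destruct (Hgf (eps / (2 * (C + 1)))) as [dg [Hdg Hgb]]. apply Rdiv_lt_0_compat; lra.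
  destruct (pos_min1 (eps / (6 * MM * (e + 1)))) as [He2 [He21 He22]]. apply Rdiv_lt_0_compat; nra.
  set (e2 := Rmin 1 (eps / (6 * MM * (e + 1)))) in *.
  destruct (pos_min1 (eps / (6 * MM * ML))) as [He3 [He31 He32]]. apply Rdiv_lt_0_compat; nra.
  set (e3 := Rmin 1 (eps / (6 * MM * ML))) in *.
  destruct (pos_min1 (eps / (6 * MM * (nw + 1)))) as [He4 [He41 He42]]. apply Rdiv_lt_0_compat; nra.
  set (e4 := Rmin 1 (eps / (6 * MM * (nw + 1)))) in *.
  destruct (Hff e2 He2) as [df [Hdf Hfb]].
  destruct (expm_cont t e3 He3) as [d3 [Hd3 Hb3]].
  destruct (expm_deriv t e4 He4) as [d4 [Hd4 Hb4]].
  destruct (Rmin5 df d3 d4 rho (dg / (C + 1))) as [dl [Hdl [H1 [H2 [H3 [H4 H5]]]]]]; auto.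
  apply Rdiv_lt_0_compat; lra.
  exists dl. split; auto.
  intros h s Hh Hs HE.
  set (m := Rmax (vnorm h) (Rabs s)).
  assert (Hm1 : vnorm h <= m) by apply Rmax_l. assert (Hm2 : Rabs s <= m) by apply Rmax_r.
  assert (Hxh : vnorm (vsub (vadd x h) x) < rho) by (rewrite vadd_sub_cancel_l; lra).
  assert (Hts : Rabs (t + s - t) < rho) by (replace (t + s - t) with s by ring; lra).
  destruct (Hrep _ _ HE Hxh Hts) as [_ [Hrep2 [Hrep3 _]]].
  set (e' := exp (- (t + s))).
  assert (Hb3' : Rabs (e' - e) < e3) by (apply Hb3; replace (t + s - t) with s by ring; lra).
  assert (Hb4' : Rabs (e' - e + s * e) <= e4 * Rabs s) by (apply Hb4; lra).
  assert (He' : 0 < e' <= e + 1) by (split; [apply exp_pos|apply Rabs_def2 in Hb3'; lra]).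
  assert (HDxh : D (vadd x h)) by eauto.
  set (Dl := vsub (f (vadd x h)) (f x)).
  assert (HfbD : vnorm (vsub Dl (Df x h)) <= e2 * vnorm h) by (apply Hfb; auto; lra).
  set (k := vsub (Psi y0 (f (vadd x h)) (t + s)) y).
  assert (Hk : k = vadd (vscal e' Dl) (vscal (e' - e) w)) by (unfold k, y; rewrite Psi_diff; auto).
  set (l := vadd (vscal e (Df x h)) (vscal s (vopp (vsub y y0)))).
  assert (Hl : vscal s (vopp (vsub y y0)) = vscal (- s * e) w).
  { unfold y. rewrite Psi_sub. fold e w. rewrite <- vscal_oppr, vscal_assoc. f_equal. ring. }
  assert (Hkl : vsub k l = vadd (vadd (vscal e' (vsub Dl (Df x h))) (vscal (e' - e) (Df x h))) (vscal (e' - e - - s * e) w)).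
  { unfold l. rewrite Hk, Hl, vsub_add_add, vscal_sub2, <- vscal_sub_s. auto. }
  assert (HLh : vnorm (Df x h) <= ML * m).
  { eapply Rle_trans. apply HbL. apply Rmult_le_compat_l; lra. }
  assert (T1 : vnorm (vscal e' (vsub Dl (Df x h))) <= eps / (6 * MM) * m).
  { rewrite vnorm_scal, Rabs_right by lra.
    apply Rle_trans with ((e + 1) * (e2 * m)). apply Rmult_le_compat; try lra. apply vnorm_nonneg.
    apply Rle_trans with (e2 * vnorm h); auto. apply Rmult_le_compat_l; lra.
    rewrite <- Rmult_assoc. apply Rmult_le_compat_r. pose proof (vnorm_nonneg _ h); lra.
    apply Rle_trans with ((e + 1) * (eps / (6 * MM * (e + 1)))). apply Rmult_le_compat_l; lra.
    right; field; lra. }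
  assert (T2 : vnorm (vscal (e' - e) (Df x h)) <= eps / (6 * MM) * m).
  { rewrite vnorm_scal. apply Rle_trans with (e3 * (ML * m)). apply Rmult_le_compat; try lra. apply Rabs_pos. apply vnorm_nonneg.
    rewrite <- Rmult_assoc. apply Rmult_le_compat_r. pose proof (vnorm_nonneg _ h); lra.
    apply Rle_trans with (eps / (6 * MM * ML) * ML). apply Rmult_le_compat_r; lra.
    right; field; lra. }
  assert (T3 : vnorm (vscal (e' - e - - s * e) w) <= eps / (6 * MM) * m).
  { rewrite vnorm_scal. replace (e' - e - - s * e) with (e' - e + s * e) by ring. fold nw.
    apply Rle_trans with (e4 * m * nw). apply Rmult_le_compat_r; auto.
    apply Rle_trans with (e4 * Rabs s); auto. apply Rmult_le_compat_l; lra.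
    rewrite Rmult_assoc, (Rmult_comm m), <- Rmult_assoc. apply Rmult_le_compat_r. pose proof (vnorm_nonneg _ h); lra.
    apply Rle_trans with (eps / (6 * MM * (nw + 1)) * (nw + 1)). apply Rmult_le_compat; lra.
    right; field; lra. }
  assert (Hklb : vnorm (vsub k l) <= eps / (2 * MM) * m).
  { rewrite Hkl. eapply Rle_trans. apply vnorm_triangle. eapply Rle_trans. apply Rplus_le_compat_r. apply vnorm_triangle.
    replace (eps / (2 * MM) * m) with (eps / (6 * MM) * m + eps / (6 * MM) * m + eps / (6 * MM) * m) by (field; lra).
    lra. }
  assert (HDl : vnorm Dl <= (1 + ML) * m).
  { pose proof (vnorm_sub_ge _ Dl (Df x h)). pose proof (vnorm_nonneg _ h). assert (e2 * vnorm h <= 1 * m) by (apply Rmult_le_compat; lra). lra. }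
  assert (Hee : Rabs (e' - e) <= (1 + e) * m).
  { pose proof (Rabs_triang (e' - e + s * e) (- (s * e))). replace (e' - e + s * e + - (s * e)) with (e' - e) in H by ring.
    rewrite Rabs_Ropp, Rabs_mult, (Rabs_right e) in H by lra.
    assert (e4 * Rabs s <= 1 * m) by (apply Rmult_le_compat; try lra; apply Rabs_pos).
    assert (Rabs s * e <= m * e) by (apply Rmult_le_compat_r; lra). lra. }
  assert (Hkb : vnorm k <= C * m).
  { rewrite Hk. eapply Rle_trans. apply vnorm_triangle. rewrite !vnorm_scal, (Rabs_right e') by lra. fold nw.
    assert (e' * vnorm Dl <= (e + 1) * ((1 + ML) * m)) by (apply Rmult_le_compat; try lra; apply vnorm_nonneg).
    assert (Rabs (e' - e) * nw <= (1 + e) * m * nw) by (apply Rmult_le_compat_r; lra).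
    unfold C. nra. }
  assert (Hm0 : 0 <= m) by (pose proof (vnorm_nonneg _ h); lra).
  assert (Hkd : vnorm k < dg).
  { apply Rle_lt_trans with ((C + 1) * m). nra.
    assert (m < dg / (C + 1)) by (unfold m; apply Rmax_lub_lt; lra).
    apply (Rmult_lt_compat_l (C + 1)) in H; [|lra]. replace ((C + 1) * (dg / (C + 1))) with dg in H by (field; lra). lra. }
  assert (Hyk : vadd y k = Psi y0 (f (vadd x h)) (t + s)) by (unfold k; apply vadd_sub_r).
  specialize (Hgb k Hkd). rewrite Hyk in Hgb. specialize (Hgb Hrep3).
  rewrite Hrep2. fold p. rewrite <- Hgy, HA, HB.
  rewrite <- (lin_scal HM), <- (lin_add HM). fold e. fold l.
  rewrite (vsub_chasles _ _ (Dg y k)). eapply Rle_trans. apply vnorm_triangle.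
  rewrite <- (lin_sub HM).
  assert (vnorm (Dg y (vsub k l)) <= MM * (eps / (2 * MM) * m)).
  { eapply Rle_trans. apply HbM. apply Rmult_le_compat_l; lra. }
  assert (eps / (2 * (C + 1)) * vnorm k <= eps / 2 * m).
  { apply Rle_trans with (eps / (2 * (C + 1)) * ((C + 1) * m)). apply Rmult_le_compat_l.
    apply Rlt_le, Rdiv_lt_0_compat; lra. nra. right; field; lra. }
  replace (MM * (eps / (2 * MM) * m)) with (eps / 2 * m) in H by (field; lra).
  fold m. lra.
Qed.

Lemma A_bl x t : ES x t -> bounded_linear (Aop x t).
Proof.
  intros Hxt.
  pose proof (good_star X Y D f y0 Hloc) as [GD [GO [GPD [GC [G0 [GI [GP0 GCj]]]]]]].
  assert (Hx : D x) by eauto. assert (Hp : D (PS x t)) by eauto.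
  destruct (chart1_ex (PS x t) Hp) as [U [g [Dg Hc]]].
  pose proof Hc as [HUo [HUD [HUp [HVo [Hinj [Hg [HDg [HDgc HK]]]]]]]].
  set (p := PS x t) in *. set (y := Psi y0 (f x) t).
  assert (Hfp : f p = y) by (apply GCj; auto).
  assert (HVy : image f U y) by (exists p; auto).
  pose proof (HDg y HVy) as [HM _]. pose proof (HDf x Hx) as [HL _].
  apply (bl_ext (fun h => Dg y (vscal (exp (- t)) (Df x h)))).
  - intro h. unfold Aop. fold p. rewrite (Finv_chart p U g Dg p); auto. rewrite Hfp; auto.
  - apply (lin_comp _ _ _ (fun h => vscal (exp (- t)) (Df x h))); auto.
    apply (lin_comp _ _ _ (Df x) (fun v => vscal (exp (- t)) v)); auto. apply bl_scal.
Qed.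

Lemma est_cont x t : ES x t -> forall eps, 0 < eps -> exists delta, 0 < delta /\
  forall x' t', ES x' t' -> vnorm (vsub x' x) < delta -> Rabs (t' - t) < delta ->
    (forall h, vnorm (vsub (Aop x' t' h) (Aop x t h)) <= eps * vnorm h) /\
    vnorm (vsub (Bop x' t') (Bop x t)) <= eps.
Proof.
  intros Hxt eps He.
  pose proof (good_star X Y D f y0 Hloc) as [GD [GO [GPD [GC [G0 [GI [GP0 GCj]]]]]]].
  assert (Hx : D x) by eauto. assert (Hp : D (PS x t)) by eauto.
  destruct (chart1_ex (PS x t) Hp) as [U [g [Dg Hc]]].
  destruct (local_rep x t U g Dg Hxt Hc) as [rho [Hrho Hrep]].
  pose proof Hc as [HUo [HUD [HUp [HVo [Hinj [Hg [HDg [HDgc HK]]]]]]]].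
  set (p := PS x t) in *. set (y := Psi y0 (f x) t).
  assert (Hfp : f p = y) by (apply GCj; auto).
  assert (HVy : image f U y) by (exists p; auto).
  pose proof (HDg y HVy) as [HM _]. pose proof (HDf x Hx) as [HL _].
  destruct (lin_bound HM) as [MM [HMM HbM]].
  destruct (lin_bound HL) as [ML [HML HbL]].
  set (e := exp (- t)). assert (He0 : 0 < e) by apply exp_pos.
  set (ny := vnorm (vsub y y0)). assert (Hny : 0 <= ny) by apply vnorm_nonneg.
  set (K := e * ML + ny + 1). assert (HK0 : 0 < K) by (unfold K; nra).
  destruct (pos_min1 (eps / (3 * K))) as [He5 [He51 He52]]. apply Rdiv_lt_0_compat; lra.
  set (e5 := Rmin 1 (eps / (3 * K))) in *.
  destruct (pos_min1 (eps / (3 * (MM + 1) * (e + 1)))) as [He6 [He61 He62]]. apply Rdiv_lt_0_compat; nra.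
  set (e6 := Rmin 1 (eps / (3 * (MM + 1) * (e + 1)))) in *.
  destruct (pos_min1 (eps / (3 * (MM + 1) * ML))) as [He7 [He71 He72]]. apply Rdiv_lt_0_compat; nra.
  set (e7 := Rmin 1 (eps / (3 * (MM + 1) * ML))) in *.
  destruct (HDgc y HVy e5 He5) as [d5 [Hd5 Hb5]].
  set (eta := Rmin d5 (eps / (3 * (MM + 1)))).
  assert (Heta : 0 < eta) by (apply Rmin_pos; auto; apply Rdiv_lt_0_compat; lra).
  assert (Heta1 : eta <= d5) by apply Rmin_l. assert (Heta2 : eta <= eps / (3 * (MM + 1))) by apply Rmin_r.
  destruct (Psi_cont Y y0 (f x) t eta Heta) as [dp [Hdp Hbp]].
  destruct (f_cont X Y D f Hloc x Hx dp Hdp) as [dfc [Hdfc Hbfc]].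
  destruct (Df_cont x Hx e6 He6) as [d6 [Hd6 Hb6]].
  destruct (expm_cont t e7 He7) as [d7 [Hd7 Hb7]].
  destruct (Rmin5 rho dp dfc d6 d7) as [dl [Hdl [H1 [H2 [H3 [H4 H5]]]]]]; auto.
  exists dl. split; auto.
  intros x' t' HE Hxx Htt.
  destruct (Hrep x' t' HE ltac:(lra) ltac:(lra)) as [HUq [_ [HVq Hfq]]].
  set (q := PS x' t') in *. set (y' := Psi y0 (f x') t') in *.
  assert (Hx' : D x') by eauto.
  assert (Hyy : vnorm (vsub y' y) < eta).
  { apply Hbp. apply Hbfc. lra. lra. }
  assert (HA' : forall h, Aop x' t' h = Dg y' (vscal (exp (- t')) (Df x' h))).
  { intro h. unfold Aop. fold q. rewrite (Finv_chart p U g Dg q); auto. rewrite Hfq; auto. }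
  assert (HA : forall h, Aop x t h = Dg y (vscal e (Df x h))).
  { intro h. unfold Aop. fold p. rewrite (Finv_chart p U g Dg p); auto. rewrite Hfp; auto. }
  assert (HB' : Bop x' t' = Dg y' (vopp (vsub y' y0))).
  { unfold Bop. fold q. rewrite (F_eq p U g Dg q); auto. rewrite Hfq; auto. }
  assert (HB : Bop x t = Dg y (vopp (vsub y y0))).
  { unfold Bop. fold p. rewrite (F_eq p U g Dg p); auto. rewrite Hfp; auto. }
  assert (Hd5' : forall v, vnorm (vsub (Dg y' v) (Dg y v)) <= e5 * vnorm v) by (apply Hb5; auto; lra).
  pose proof (HDg y' HVq) as [HM' _].
  assert (Hop : forall v, vnorm (Dg y' v) <= (MM + 1) * vnorm v).
  { intro v. pose proof (vnorm_sub_ge _ (Dg y' v) (Dg y v)). specialize (Hd5' v). specialize (HbM v).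
    pose proof (vnorm_nonneg _ v). assert (e5 * vnorm v <= 1 * vnorm v) by (apply Rmult_le_compat_r; lra). lra. }
  set (e' := exp (- t')).
  assert (Hee : Rabs (e' - e) < e7) by (apply Hb7; lra).
  assert (He' : 0 < e' <= e + 1) by (split; [apply exp_pos|apply Rabs_def2 in Hee; lra]).
  split.
  - intro h. rewrite HA, HA'. fold e'.
    pose proof (vnorm_nonneg _ h) as Hh0.
    rewrite (vsub_chasles _ _ (Dg y' (vscal e (Df x h)))). eapply Rle_trans. apply vnorm_triangle.
    rewrite <- (lin_sub HM').
    assert (Hv : vnorm (vsub (vscal e' (Df x' h)) (vscal e (Df x h))) <= ((e + 1) * e6 + e7 * ML) * vnorm h).
    { rewrite vscal_sub2. eapply Rle_trans. apply vnorm_triangle. rewrite !vnorm_scal, (Rabs_right e') by lra.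
      assert (Hq1 : vnorm (vsub (Df x' h) (Df x h)) <= e6 * vnorm h) by (apply Hb6; auto; lra).
      assert (e' * vnorm (vsub (Df x' h) (Df x h)) <= (e + 1) * (e6 * vnorm h)) by (apply Rmult_le_compat; try lra; apply vnorm_nonneg).
      assert (Rabs (e' - e) * vnorm (Df x h) <= e7 * (ML * vnorm h)) by (apply Rmult_le_compat; try lra; try apply Rabs_pos; try apply vnorm_nonneg; apply HbL).
      nra. }
    assert (Hp1 : vnorm (Dg y' (vsub (vscal e' (Df x' h)) (vscal e (Df x h)))) <= eps / 3 * vnorm h + eps / 3 * vnorm h).
    { eapply Rle_trans. apply Hop.
      apply Rle_trans with ((MM + 1) * (((e + 1) * e6 + e7 * ML) * vnorm h)). apply Rmult_le_compat_l; lra.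
      assert ((MM + 1) * ((e + 1) * e6) <= eps / 3).
      { apply Rle_trans with ((MM + 1) * ((e + 1) * (eps / (3 * (MM + 1) * (e + 1))))).
        apply Rmult_le_compat_l. lra. apply Rmult_le_compat_l; lra. right; field; lra. }
      assert ((MM + 1) * (e7 * ML) <= eps / 3).
      { apply Rle_trans with ((MM + 1) * (eps / (3 * (MM + 1) * ML) * ML)).
        apply Rmult_le_compat_l. lra. apply Rmult_le_compat_r; lra. right; field; lra. }
      nra. }
    assert (Hp2 : vnorm (vsub (Dg y' (vscal e (Df x h))) (Dg y (vscal e (Df x h)))) <= eps / 3 * vnorm h).
    { eapply Rle_trans. apply Hd5'. rewrite vnorm_scal, Rabs_right by lra.
      apply Rle_trans with (e5 * (e * (ML * vnorm h))). apply Rmult_le_compat_l. lra. apply Rmult_le_compat_l. lra. apply HbL.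
      assert (e5 * (e * ML) <= eps / 3).
      { apply Rle_trans with (eps / (3 * K) * K). apply Rmult_le_compat; try nra. unfold K; lra.
        right; field; lra. }
      nra. }
    lra.
  - rewrite HB, HB'.
    rewrite (vsub_chasles _ _ (Dg y' (vopp (vsub y y0)))). eapply Rle_trans. apply vnorm_triangle.
    rewrite <- (lin_sub HM'), vsub_opp, vsub_sub_sub, (lin_opp HM'), vnorm_opp.
    assert (Hq1 : vnorm (Dg y' (vsub y' y)) <= eps / 3).
    { eapply Rle_trans. apply Hop. apply Rle_trans with ((MM + 1) * (eps / (3 * (MM + 1)))).
      apply Rmult_le_compat_l; lra. right; field; lra. }
    assert (Hq2 : vnorm (vsub (Dg y' (vopp (vsub y y0))) (Dg y (vopp (vsub y y0)))) <= eps / 3).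
    { eapply Rle_trans. apply Hd5'. rewrite vnorm_opp. fold ny.
      apply Rle_trans with (eps / (3 * K) * K). apply Rmult_le_compat; try lra. unfold K; nra.
      right; field; lra. }
    lra.
Qed.

Lemma C1_star : C1_on_XR ES PS.
Proof.
  exists Aop, Bop. intros x t H. split. apply A_bl; auto. split.
  - apply est_frechet; auto.
  - apply est_cont; auto.
Qed.

Lemma ode1 x t : ES x t -> curve_deriv_at (ES x) (PS x) t (F (PS x t)).
Proof.
  intros H eps He. destruct (est_frechet x t H eps He) as [d [Hd Hb]].
  exists d; split; auto. intros s Hs HE.
  specialize (Hb vzero s). rewrite vadd_zero, vnorm0 in Hb. specialize (Hb Hd Hs HE).
  rewrite (lin_0 (A_bl x t H)), v0l in Hb. rewrite Rmax_right in Hb by apply Rabs_pos.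
  exact Hb.
Qed.

Lemma vscal_eq0 {B : BanachSpace} a (v : B) : a <> 0 -> vscal a v = vzero -> v = vzero.
Proof.
  intros Ha H. rewrite <- (vscal_one _ v). replace 1 with (/ a * a) by (field; auto).
  rewrite <- vscal_assoc, H. apply vscal_v0.
Qed.

Lemma ode2 x (J : R -> Prop) (gamma : R -> X) : D x ->
  open_interval_R J -> J 0 -> gamma 0 = x ->
  (forall t, J t -> D (gamma t)) ->
  (forall t, J t -> curve_deriv_at J gamma t (F (gamma t))) ->
  forall t, J t -> ES x t /\ gamma t = PS x t.
Proof.
  intros Hx [_ HI] HJ0 Hg0 HgD Hgd t Ht.
  set (u := fun s => vsub (f (gamma s)) (Psi y0 (f x) s)).
  assert (Hu : forall s, J s -> curve_deriv_at J u s (vopp (u s))).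
  { intros s Hs.
    assert (H1 : curve_deriv_at J (fun r => f (gamma r)) s (vopp (vsub (f (gamma s)) y0))).
    { rewrite <- HF by auto. apply (curve_chain X Y J D); auto. }
    pose proof (curve_sub Y J (fun r => f (gamma r)) (Psi y0 (f x)) s _ _ H1 (curve_Psi Y J y0 (f x) s)) as H2.
    rewrite vsub_opp, vsub_sub_sub in H2. exact H2. }
  set (z := fun s => vscal (exp s) (u s)).
  assert (Hz : forall s, J s -> curve_deriv_at J z s vzero).
  { intros s Hs. pose proof (curve_exp_scal Y J u s _ (Hu s Hs)) as H.
    rewrite vscal_opp, vadd_opp in H. exact H. }
  assert (Hz0 : z t = z 0) by (apply (curve_zero_const Y J z); auto).
  assert (Hz00 : z 0 = vzero).
  { unfold z, u. rewrite exp_0, vscal_one, Hg0, Psi_0. apply vsub_self. }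
  assert (Hut : u t = vzero).
  { apply (vscal_eq0 (exp t)). pose proof (exp_pos t); lra. rewrite <- Hz00, <- Hz0. auto. }
  assert (Hft : forall s, J s -> f (gamma s) = Psi y0 (f x) s).
  { intros s Hs. apply vsub_eq.
    assert (Hzs : z s = z 0) by (apply (curve_zero_const Y J z); auto).
    apply (vscal_eq0 (exp s)). pose proof (exp_pos s); lra. fold (u s). fold (z s). rewrite Hzs. auto. }
  assert (Hbt : forall s, between 0 t s -> J s).
  { intros s [Hs|Hs]; [apply (HI 0 t)|apply (HI t 0)]; auto. }
  destruct (lift X Y D f y0 Hloc x t gamma Hx) as [Ha Hb].
  - apply (ccont_sub J). auto. apply (curve_ccont X J gamma (fun s => F (gamma s))); auto.
  - intros s Hs. split; auto.
  - exact Hg0.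
  - split; auto.
Qed.

Lemma ode_flow : maximal_ode_flow D F ES PS.
Proof.
  intros x Hx. split.
  - intros t Ht. apply ode1; auto.
  - intros J gamma HJ HJ0 Hg0 HgD Hgd t Ht. apply (ode2 x J gamma); auto.
Qed.

End C1.


Theorem lemma2p1 (X Y : BanachSpace) (D : X -> Prop) (x0 : X) (f : X -> Y) :
  (exists x, D x) -> is_open D -> is_connected D -> D x0 ->
  local_homeomorphism D f ->
  (forall DPhi1 Phi1 DPhi2 Phi2,
     is_flow_in D DPhi1 Phi1 -> conjugates f (f x0) DPhi1 Phi1 ->
     is_flow_in D DPhi2 Phi2 -> conjugates f (f x0) DPhi2 Phi2 ->
     forall x t, DPhi1 x t -> DPhi2 x t -> Phi1 x t = Phi2 x t) /\
  (exists (DPhi : X -> R -> Prop) (Phi : X -> R -> X),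
     is_flow_in D DPhi Phi /\ conjugates f (f x0) DPhi Phi /\
     (forall DPhi' Phi', is_flow_in D DPhi' Phi' -> conjugates f (f x0) DPhi' Phi' ->
        forall x t, DPhi' x t -> DPhi x t) /\
     (local_C1_diffeomorphism D f ->
      forall Df : X -> X -> Y, frechet_derivative_on D f Df ->
      forall F : X -> X, (forall x, D x -> Df x (F x) = vopp (vsub (f x) (f x0))) ->
      C1_on_XR DPhi Phi /\ maximal_ode_flow D F DPhi Phi)).
Proof.
  intros _ HDo _ _ Hloc. split.
  - intros E1 P1 E2 P2 H1 C1 H2 C2 x t Hx1 Hx2.
    apply (good_consistent X Y D f (f x0) Hloc E1 P1 E2 P2 x t); auto;
      apply flow_good; auto.
  - exists (Estar X Y D f (f x0)), (Pstar X Y D f (f x0)).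
    pose proof (good_star X Y D f (f x0) Hloc) as GS.
    split. apply star_flow; auto.
    split. destruct GS as [_ [_ [_ [_ [_ [_ [_ Hc]]]]]]]; exact Hc.
    split.
    + intros E P HE HC x t H. apply (good_sub X Y D f (f x0) E P x t); auto. apply flow_good; auto.
    + intros HC1 Df HDf F HF. split.
      * apply (C1_star X Y D f (f x0) HDo Hloc HC1 Df HDf F HF).
      * apply (ode_flow X Y D f (f x0) Hloc HC1 Df HDf F HF).
Qed.
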